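(* Let $T>0$ and let $(c,\rho,\theta,u)$ be a smooth solution of (NS) on $[0,T]\times\mathbb T$ with $c\in[0,1]$ and assume there are positive constants with $\underline\rho\le\rho\le\overline\rho$ and $\underline\theta\le\theta\le\overline\theta$ on $[0,T]\times\mathbb T$. Then there exist constants $C_8,C_9>0$, depending only on $T$, these bounds, $\mu_\pm,\gamma_\pm,c_{v,\pm}$, $\int_0^1\sigma_0^2$ and $\int_0^1\rho_0E_0$, such that $\int_0^1(\partial_xu)^2(t)\le C_8$ for all $t\in[0,T]$ and $\int_0^T\|\partial_xu\|_{L^\infty(\mathbb T)}^2\le C_9$; i.e. $\partial_xu\in L^\infty(0,T;L^2(\mathbb T))\cap L^2(0,T;L^\infty(\mathbb T))$ using only $\sigma_0\in L^2(\mathbb T)$.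
   Context: $\mathbb T=\mathbb R/\mathbb Z$ is identified with $[0,1)$. Fix constants $\mu_\pm>0$, $\gamma_\pm>1$, $c_{v,\pm}>0$, and for $c\in[0,1]$ set $\mu(c)=c\mu_++(1-c)\mu_-$, $\gamma(c)=c\gamma_++(1-c)\gamma_-$, $c_v(c)=c\,c_{v,+}+(1-c)c_{v,-}$. For unknowns $c,\rho,\theta,u$ on $[0,T]\times\mathbb T$, write $p=(\gamma(c)-1)\rho\theta$, $\sigma=\mu(c)\partial_xu-p$, $E=u^2/2+c_v(c)\theta$. The mesoscopic system (NS) is $\partial_t\rho+\partial_x(\rho u)=0$, $\partial_t(\rho c)+\partial_x(\rho c u)=0$, $\partial_t(\rho u)+\partial_x(\rho u^2)=\partial_x\sigma$, $\partial_t(\rho E)+\partial_x(\rho E u)=\partial_x(\sigma u)$, with initial data $\rho_0,c_0,u_0,\theta_0$, $E_0=u_0^2/2+c_v(c_0)\theta_0$, and $\sigma_0=\sigma|_{t=0}$. *)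

(* Defs.v *)
From Stdlib Require Import Reals List.
From Coquelicot Require Import Coquelicot.
Open Scope R_scope.

(* Fields are functions of (t, x) in R x R; x is the spatial variable,
   1-periodicity in x encodes the torus T = R/Z. *)
Definition field := R -> R -> R.

Definition pDt (f : field) : field := fun t x => Derive (fun s => f s x) t.
Definition pDx (f : field) : field := fun t x => Derive (fun y => f t y) x.

(* iterated mixed partial derivatives along a word (true = d/dt, false = d/dx) *)
Fixpoint Dw (w : list bool) (f : field) : field :=
  match w with
  | nil => f
  | b :: w' => (if b then pDt else pDx) (Dw w' f)
  end.

Definition smooth (f : field) : Prop :=
  forall w : list bool,
    (forall t x, ex_derive (fun s => Dw w f s x) t /\ ex_derive (fun y => Dw w f t y) x) /\
    (forall t x, continuous (fun p : R * R => Dw w f (fst p) (snd p)) (t, x)).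

Definition periodic1 (f : field) : Prop := forall t x, f t (x + 1) = f t x.

(* L^infinity(T) norm of a 1-periodic function: sup over one period [0,1] *)
Definition Linf_norm (g : R -> R) : R :=
  real (Lub_Rbar (fun y => exists x, 0 <= x <= 1 /\ y = Rabs (g x))).

Definition mix (a_plus a_minus c : R) : R := c * a_plus + (1 - c) * a_minus.

Section NS.
Variables (mu_p mu_m gam_p gam_m cv_p cv_m : R).

Definition muc (c : R) := mix mu_p mu_m c.
Definition gamc (c : R) := mix gam_p gam_m c.
Definition cvc (c : R) := mix cv_p cv_m c.

Definition pres (c rho theta : field) : field :=
  fun t x => (gamc (c t x) - 1) * rho t x * theta t x.
Definition sigmaNS (c rho theta u : field) : field :=
  fun t x => muc (c t x) * pDx u t x - pres c rho theta t x.
Definition energyNS (c theta u : field) : field :=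
  fun t x => u t x ^ 2 / 2 + cvc (c t x) * theta t x.

Definition NS_system (T : R) (c rho theta u : field) : Prop :=
  forall t x, 0 <= t <= T ->
    pDt rho t x + pDx (fun s y => rho s y * u s y) t x = 0 /\
    pDt (fun s y => rho s y * c s y) t x + pDx (fun s y => rho s y * c s y * u s y) t x = 0 /\
    pDt (fun s y => rho s y * u s y) t x + pDx (fun s y => rho s y * u s y ^ 2) t x
      = pDx (sigmaNS c rho theta u) t x /\
    pDt (fun s y => rho s y * energyNS c theta u s y) t x
      + pDx (fun s y => rho s y * energyNS c theta u s y * u s y) t x
      = pDx (fun s y => sigmaNS c rho theta u s y * u s y) t x.
End NS.

(* Main.v *)
Require Import Defs.
From Stdlib Require Import Reals Lra List.
From Coquelicot Require Import Coquelicot.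
Open Scope R_scope.

Ltac toR := match goal with |- ?a = ?b => change (@eq R a b) end.

Lemma cont_pt_eps (f : R -> R) x :
  (forall eps, 0 < eps -> exists d, 0 < d /\ forall y, Rabs (y - x) < d -> Rabs (f y - f x) < eps) ->
  continuity_pt f x.
Proof.
  intros H eps He. destruct (H eps He) as [d [Hd Hy]].
  exists d; split; auto. intros y [_ Hyd]. apply Hy. exact Hyd.
Qed.

Lemma cont_eps (f : R -> R) x :
  (forall eps, 0 < eps -> exists d, 0 < d /\ forall y, Rabs (y - x) < d -> Rabs (f y - f x) < eps) ->
  continuous f x.
Proof.
  intros H. apply continuity_pt_filterlim. apply cont_pt_eps. exact H.
Qed.

Lemma c2_x (f : R -> R -> R) t x : continuity_2d_pt f t x -> continuity_pt (fun y => f t y) x.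
Proof.
  intros H. apply cont_pt_eps. intros eps He.
  destruct (H (mkposreal eps He)) as [d Hd].
  exists d; split. apply cond_pos. intros y Hy. apply Hd; simpl; auto.
  rewrite Rminus_eq_0, Rabs_R0; apply cond_pos.
Qed.

Lemma c2_t (f : R -> R -> R) t x : continuity_2d_pt f t x -> continuity_pt (fun s => f s x) t.
Proof.
  intros H. apply cont_pt_eps. intros eps He.
  destruct (H (mkposreal eps He)) as [d Hd].
  exists d; split. apply cond_pos. intros y Hy. apply Hd; simpl; auto.
  rewrite Rminus_eq_0, Rabs_R0; apply cond_pos.
Qed.

Lemma c2_xc (f : R -> R -> R) t x : continuity_2d_pt f t x -> continuous (fun y => f t y) x.
Proof. intros H; apply continuity_pt_filterlim, c2_x, H. Qed.

Lemma c2_tc (f : R -> R -> R) t x : continuity_2d_pt f t x -> continuous (fun s => f s x) t.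
Proof. intros H; apply continuity_pt_filterlim, c2_t, H. Qed.

Lemma ex_RInt_c2 (f : R -> R -> R) t a b : a <= b ->
  (forall y, a <= y <= b -> continuity_2d_pt f t y) -> ex_RInt (fun y => f t y) a b.
Proof.
  intros Hab H. apply (ex_RInt_continuous (V:=R_CompleteNormedModule)). intros z Hz.
  rewrite Rmin_left, Rmax_right in Hz by lra. apply c2_xc, H, Hz.
Qed.

Lemma c2_pow (f : R -> R -> R) t x : continuity_2d_pt f t x ->
  continuity_2d_pt (fun s y => f s y ^ 2) t x.
Proof.
  intros H. apply continuity_2d_pt_ext with (f := fun s y => f s y * f s y).
  intros; ring. apply continuity_2d_pt_mult; auto.
Qed.

Lemma c2_div (f g : R -> R -> R) t x : continuity_2d_pt f t x -> continuity_2d_pt g t x ->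
  g t x <> 0 -> continuity_2d_pt (fun s y => f s y / g s y) t x.
Proof.
  intros Hf Hg Hn. unfold Rdiv. apply continuity_2d_pt_mult; auto.
  apply continuity_2d_pt_inv; auto.
Qed.

Lemma unif_t (g : R -> R -> R) a b t0 :
  (forall y, a <= y <= b -> continuity_2d_pt g t0 y) ->
  forall eps, 0 < eps -> exists d, 0 < d /\
    forall s y, Rabs (s - t0) < d -> a <= y <= b -> Rabs (g s y - g t0 y) < eps.
Proof.
  intros H eps He.
  destruct (uniform_continuity_2d_1d' g a b t0 H (mkposreal eps He)) as [d Hd].
  exists d; split. apply cond_pos. intros s y Hs Hy.
  apply (Hd y t0 y s Hy); auto.
  - pose proof (cond_pos d); lra.
  - apply Rabs_def2 in Hs; lra.
  - rewrite Rminus_eq_0, Rabs_R0; apply cond_pos.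
Qed.

Lemma RInt_extR (f g : R -> R) a b : a <= b -> (forall x, a <= x <= b -> f x = g x) ->
  RInt f a b = RInt g a b.
Proof. intros Hab H. apply RInt_ext. intros x Hx. rewrite Rmin_left, Rmax_right in Hx by lra.
  apply H; lra. Qed.

Lemma ex_RInt_extR (f g : R -> R) a b : a <= b -> (forall x, a <= x <= b -> f x = g x) ->
  ex_RInt f a b -> ex_RInt g a b.
Proof. intros Hab H. apply ex_RInt_ext. intros x Hx. rewrite Rmin_left, Rmax_right in Hx by lra.
  apply H; lra. Qed.

Lemma RInt_plusR (f g : R -> R) a b : ex_RInt f a b -> ex_RInt g a b ->
  RInt (fun x => f x + g x) a b = RInt f a b + RInt g a b.
Proof. intros Hf Hg. exact (RInt_plus f g a b Hf Hg). Qed.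

Lemma RInt_minusR (f g : R -> R) a b : ex_RInt f a b -> ex_RInt g a b ->
  RInt (fun x => f x - g x) a b = RInt f a b - RInt g a b.
Proof. intros Hf Hg. exact (RInt_minus f g a b Hf Hg). Qed.

Lemma RInt_scalR (f : R -> R) a b k : ex_RInt f a b ->
  RInt (fun x => k * f x) a b = k * RInt f a b.
Proof. intros Hf. exact (RInt_scal f a b k Hf). Qed.

Lemma RInt_constR a b k : RInt (fun _ => k) a b = k * (b - a).
Proof. rewrite RInt_const. unfold scal; simpl; unfold mult; simpl. ring. Qed.

Lemma ex_RInt_plusR (f g : R -> R) a b : ex_RInt f a b -> ex_RInt g a b ->
  ex_RInt (fun x => f x + g x) a b.
Proof. intros Hf Hg. exact (ex_RInt_plus f g a b Hf Hg). Qed.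

Lemma ex_RInt_minusR (f g : R -> R) a b : ex_RInt f a b -> ex_RInt g a b ->
  ex_RInt (fun x => f x - g x) a b.
Proof. intros Hf Hg. exact (ex_RInt_minus f g a b Hf Hg). Qed.

Lemma ex_RInt_scalR (f : R -> R) a b k : ex_RInt f a b ->
  ex_RInt (fun x => k * f x) a b.
Proof. intros Hf. exact (ex_RInt_scal f a b k Hf). Qed.

Lemma ex_RInt_constR a b (k : R) : ex_RInt (fun _ => k) a b.
Proof. exact (ex_RInt_const a b k). Qed.

Lemma RInt_leR (f g : R -> R) a b : a <= b -> ex_RInt f a b -> ex_RInt g a b ->
  (forall x, a <= x <= b -> f x <= g x) -> RInt f a b <= RInt g a b.
Proof. intros Hab Hf Hg H. apply RInt_le; auto. intros x Hx; apply H; lra. Qed.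

Lemma RInt_ge0 (f : R -> R) a b : a <= b -> ex_RInt f a b ->
  (forall x, a <= x <= b -> 0 <= f x) -> 0 <= RInt f a b.
Proof.
  intros Hab Hf H. assert (E : RInt (fun _ => 0) a b = 0) by (rewrite RInt_constR; simpl; ring).
  rewrite <- E. apply RInt_leR; auto. apply ex_RInt_constR.
Qed.

Lemma RInt_cont_param (G : R -> R -> R) t0 :
  (exists d, 0 < d /\ forall s y, Rabs (s - t0) < d -> 0 <= y <= 1 -> continuity_2d_pt G s y) ->
  continuous (fun s => RInt (fun y => G s y) 0 1) t0.
Proof.
  intros [d [Hd H]]. apply cont_eps. intros eps He.
  destruct (unif_t G 0 1 t0 (fun y Hy => H t0 y ltac:(rewrite Rminus_eq_0, Rabs_R0; lra) Hy)
              (eps/2) ltac:(lra)) as [d' [Hd' H']].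
  exists (Rmin d d'); split. apply Rmin_glb_lt; auto.
  intros s Hs.
  assert (Hs1 : Rabs (s - t0) < d) by (eapply Rlt_le_trans; [exact Hs| apply Rmin_l]).
  assert (Hs2 : Rabs (s - t0) < d') by (eapply Rlt_le_trans; [exact Hs| apply Rmin_r]).
  assert (E1 : ex_RInt (fun y => G s y) 0 1) by (apply ex_RInt_c2; [lra| intros; apply H; auto]).
  assert (E2 : ex_RInt (fun y => G t0 y) 0 1) by (apply ex_RInt_c2; [lra| intros; apply H; auto; rewrite Rminus_eq_0, Rabs_R0; lra]).
  rewrite <- RInt_minusR by auto.
  apply Rle_lt_trans with ((1 - 0) * (eps/2)); [|lra].
  apply abs_RInt_le_const. lra. apply ex_RInt_minusR; auto.
  intros y Hy. left. apply H'; auto.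
Qed.

Lemma FTC (f df : R -> R) a b : a <= b ->
  (forall x, a <= x <= b -> is_derive f x (df x)) ->
  (forall x, a <= x <= b -> continuous df x) ->
  RInt df a b = f b - f a.
Proof.
  intros Hab Hd Hc. apply is_RInt_unique.
  apply (is_RInt_derive (V:=R_CompleteNormedModule)).
  intros x Hx; rewrite Rmin_left, Rmax_right in Hx by lra; auto.
  intros x Hx; rewrite Rmin_left, Rmax_right in Hx by lra; auto.
Qed.

Lemma zero_int (H h : R -> R) :
  (forall x, 0 <= x <= 1 -> is_derive H x (h x)) ->
  (forall x, 0 <= x <= 1 -> continuous h x) -> H 1 = H 0 -> RInt h 0 1 = 0.
Proof.
  intros Hd Hc Hp. rewrite (FTC H h 0 1); auto. lra. lra.
Qed.

Lemma ball_R (x e y : R) : ball x e y <-> Rabs (y - x) < e.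
Proof. split; intros H; exact H. Qed.

Lemma param_deriv (F dF : R -> R -> R) t0 d : 0 < d ->
  (forall s y, Rabs (s - t0) < d -> -1 < y < 2 -> is_derive (fun z => F z y) s (dF s y)) ->
  (forall s y, Rabs (s - t0) < d -> -1 < y < 2 ->
       continuity_2d_pt F s y /\ continuity_2d_pt dF s y) ->
  is_derive (fun s => RInt (fun y => F s y) 0 1) t0 (RInt (fun y => dF t0 y) 0 1).
Proof.
  intros Hd HD HC.
  assert (Ht0 : Rabs (t0 - t0) < d) by (rewrite Rminus_eq_0, Rabs_R0; lra).
  assert (E : RInt (fun y => dF t0 y) 0 1 = RInt (fun t => Derive (fun u => F u t) t0) 0 1).
  { apply RInt_ext. intros y Hy. rewrite Rmin_left, Rmax_right in Hy by lra.
    symmetry. apply is_derive_unique. apply HD; auto. lra. }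
  rewrite E. apply (is_derive_RInt_param F 0 1 t0).
  - exists (mkposreal d Hd). intros s Hs t Ht. rewrite Rmin_left, Rmax_right in Ht by lra.
    eexists. apply HD. exact Hs. lra.
  - intros t Ht. rewrite Rmin_left, Rmax_right in Ht by lra.
    apply continuity_2d_pt_ext_loc with (f := dF).
    + exists (mkposreal (Rmin d 1) (Rmin_glb_lt _ _ _ Hd Rlt_0_1)). simpl.
      intros u v Hu Hv. symmetry. apply is_derive_unique. apply HD.
      eapply Rlt_le_trans; [exact Hu|apply Rmin_l].
      assert (Rabs (v - t) < 1) by (eapply Rlt_le_trans; [exact Hv|apply Rmin_r]).
      apply Rabs_def2 in H. lra.
    + apply HC; auto. lra.
  - exists (mkposreal d Hd). intros s Hs. apply ex_RInt_c2. lra.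
    intros y Hy. apply HC; auto. lra.
Qed.

Lemma Linf_spec (g : R -> R) M : (forall x, 0 <= x <= 1 -> Rabs (g x) <= M) ->
  (forall x, 0 <= x <= 1 -> Rabs (g x) <= Linf_norm g) /\
  (forall B, (forall x, 0 <= x <= 1 -> Rabs (g x) <= B) -> Linf_norm g <= B) /\
  0 <= Linf_norm g.
Proof.
  intros HM. unfold Linf_norm.
  set (E := fun y => exists x, 0 <= x <= 1 /\ y = Rabs (g x)).
  destruct (Lub_Rbar_correct E) as [Hub Hlub].
  assert (H0 : E (Rabs (g 0))) by (exists 0; split; [lra|auto]).
  assert (HubM : is_ub_Rbar E M) by (intros y [x [Hx ->]]; simpl; apply HM; auto).
  pose proof (Hlub M HubM) as HleM. pose proof (Hub _ H0) as Hge.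
  destruct (Lub_Rbar E) as [L| |] eqn:EL; simpl in *; try contradiction.
  split; [|split].
  - intros x Hx. apply (Hub (Rabs (g x))). exists x; auto.
  - intros B HB. assert (is_ub_Rbar E B) by (intros y [x [Hx ->]]; simpl; apply HB; auto).
    exact (Hlub B H).
  - pose proof (Rabs_pos (g 0)); lra.
Qed.

Lemma Linf_sq_le (g : R -> R) B : 0 <= B ->
  (forall x, 0 <= x <= 1 -> (g x)^2 <= B) -> (Linf_norm g)^2 <= B.
Proof.
  intros HB H.
  assert (Hx : forall x, 0 <= x <= 1 -> Rabs (g x) <= sqrt B).
  { intros x Hx. rewrite <- sqrt_Rsqr_abs. apply sqrt_le_1_alt.
    unfold Rsqr. specialize (H x Hx). simpl in H. lra. }
  destruct (Linf_spec g (sqrt B) Hx) as [_ [H2 H3]].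
  pose proof (H2 _ Hx).
  replace B with (sqrt B * sqrt B) by (apply sqrt_sqrt; auto).
  simpl. rewrite Rmult_1_r. apply Rmult_le_compat; auto.
Qed.

Lemma Linf_diff (g h : R -> R) M e : (forall x, 0 <= x <= 1 -> Rabs (g x) <= M) ->
  (forall x, 0 <= x <= 1 -> Rabs (h x - g x) <= e) -> Rabs (Linf_norm h - Linf_norm g) <= e.
Proof.
  intros HM He.
  assert (Hh : forall x, 0 <= x <= 1 -> Rabs (h x) <= M + e).
  { intros x Hx. specialize (HM x Hx); specialize (He x Hx).
    pose proof (Rabs_triang (h x - g x) (g x)). replace (h x - g x + g x) with (h x) in H by ring. lra. }
  destruct (Linf_spec g M HM) as [G1 [G2 G3]].
  destruct (Linf_spec h (M+e) Hh) as [H1 [H2 H3]].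
  apply Rabs_le; split.
  - cut (Linf_norm g <= Linf_norm h + e). lra.
    apply G2. intros x Hx. specialize (H1 x Hx); specialize (He x Hx).
    pose proof (Rabs_triang (g x - h x) (h x)). replace (g x - h x + h x) with (g x) in H by ring.
    rewrite Rabs_minus_sym in He. lra.
  - cut (Linf_norm h <= Linf_norm g + e). lra.
    apply H2. intros x Hx. specialize (G1 x Hx); specialize (He x Hx).
    pose proof (Rabs_triang (h x - g x) (g x)). replace (h x - g x + g x) with (h x) in H by ring. lra.
Qed.

Lemma Linf_cont (g : R -> R -> R) t0 :
  (forall s y, continuity_2d_pt g s y) -> continuous (fun s => Linf_norm (g s)) t0.
Proof.
  intros Hc.
  destruct (continuity_ab_maj (fun y => Rabs (g t0 y)) 0 1 ltac:(lra)) as [xm [Hxm _]].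
  { intros y Hy. apply (continuity_pt_comp (fun y => g t0 y) Rabs). apply c2_x, Hc. apply Rcontinuity_abs. }
  apply cont_eps. intros eps He.
  destruct (unif_t g 0 1 t0 (fun y _ => Hc t0 y) (eps/2) ltac:(lra)) as [d [Hd H]].
  exists d; split; auto. intros s Hs.
  apply Rle_lt_trans with (eps/2); [|lra].
  apply (Linf_diff (g t0) (g s) (Rabs (g t0 xm))); auto.
  intros x Hx. left. apply H; auto.
Qed.

Lemma exd_cont (f : R -> R) x : ex_derive f x -> continuous f x.
Proof. intros H. exact (ex_derive_continuous (K:=R_AbsRing) (V:=R_NormedModule) f x H). Qed.

Lemma cont_sq (h : R -> R) x : continuous h x -> continuous (fun y => h y ^ 2) x.
Proof.
  intros H. apply continuous_ext with (f := fun y => mult (h y) (h y)).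
  intros y; unfold mult; simpl; ring. apply (@continuous_mult _ R_AbsRing); auto.
Qed.

Lemma cont_ex (h : R -> R) a b : a <= b -> (forall y, a <= y <= b -> continuous h y) ->
  ex_RInt h a b.
Proof.
  intros Hab H. apply (ex_RInt_continuous (V:=R_CompleteNormedModule)).
  intros z Hz. rewrite Rmin_left, Rmax_right in Hz by lra. auto.
Qed.

Lemma CS_int (g : R -> R) a b : a <= b -> ex_RInt g a b -> ex_RInt (fun y => g y ^ 2) a b ->
  (RInt g a b)^2 <= (b - a) * RInt (fun y => g y ^ 2) a b.
Proof.
  intros Hab Hg Hg2.
  set (m := RInt g a b). set (L := b - a). set (I2 := RInt (fun y => g y ^ 2) a b).
  assert (E : @eq R (RInt (fun y => (L * g y - m) ^ 2) a b) (L * (L * I2 - m^2))).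
  { rewrite (RInt_extR _ (fun y => (L*L) * g y ^ 2 + ((-(2*L*m)) * g y + m^2))).
    2: lra. 2:{ intros; ring. }
    rewrite RInt_plusR. rewrite RInt_plusR. rewrite RInt_scalR. rewrite RInt_scalR. rewrite RInt_constR.
    fold m I2 L. ring.
    all: auto using ex_RInt_scalR, ex_RInt_constR, ex_RInt_plusR. }
  assert (P : 0 <= RInt (fun y => (L * g y - m) ^ 2) a b).
  { apply RInt_ge0; auto. 2:{ intros; apply pow2_ge_0. }
    apply ex_RInt_extR with (f := fun y => (L*L) * g y ^ 2 + ((-(2*L*m)) * g y + m^2)).
    lra. intros; ring. auto using ex_RInt_scalR, ex_RInt_constR, ex_RInt_plusR. }
  rewrite E in P.
  destruct (Req_dec L 0) as [HL|HL].
  - assert (a = b) by (unfold L in HL; lra). subst b. unfold m. rewrite RInt_point.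
    unfold zero; simpl. fold L; rewrite HL. lra.
  - assert (0 < L) by (unfold L in *; lra).
    fold L m I2. apply Rmult_le_reg_l with L; auto. nra.
Qed.

Lemma sub_int (h : R -> R) a b : 0 <= a <= b -> b <= 1 ->
  (forall y, 0 <= y <= 1 -> continuous h y) -> (forall y, 0 <= y <= 1 -> 0 <= h y) ->
  RInt h a b <= RInt h 0 1.
Proof.
  intros Ha Hb Hc Hp.
  assert (E1 : ex_RInt h 0 a) by (apply cont_ex; [lra|intros; apply Hc; lra]).
  assert (E2 : ex_RInt h a b) by (apply cont_ex; [lra|intros; apply Hc; lra]).
  assert (E3 : ex_RInt h b 1) by (apply cont_ex; [lra|intros; apply Hc; lra]).
  rewrite <- (RInt_Chasles h 0 b 1); auto. 2:{ eapply ex_RInt_Chasles; eauto. }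
  rewrite <- (RInt_Chasles h 0 a b); auto.
  unfold plus; simpl.
  assert (0 <= RInt h 0 a) by (apply RInt_ge0; [lra|auto|intros; apply Hp; lra]).
  assert (0 <= RInt h b 1) by (apply RInt_ge0; [lra|auto|intros; apply Hp; lra]).
  lra.
Qed.

Lemma diff_bound (f f' : R -> R) :
  (forall y, 0 <= y <= 1 -> is_derive f y (f' y)) ->
  (forall y, 0 <= y <= 1 -> continuous f' y) ->
  forall x y, 0 <= y <= x -> x <= 1 -> (f x - f y)^2 <= RInt (fun z => f' z ^ 2) 0 1.
Proof.
  intros Hd Hc x y Hy Hx.
  rewrite <- (FTC f f' y x); try lra.
  2: intros; apply Hd; lra. 2: intros; apply Hc; lra.
  apply Rle_trans with ((x - y) * RInt (fun z => f' z ^ 2) y x).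
  apply CS_int. lra. apply cont_ex; [lra|intros; apply Hc; lra].
  apply cont_ex; [lra|intros; apply cont_sq, Hc; lra].
  apply Rle_trans with (1 * RInt (fun z => f' z ^ 2) y x).
  apply Rmult_le_compat_r. apply RInt_ge0. lra.
  apply cont_ex; [lra|intros; apply cont_sq, Hc; lra]. intros; apply pow2_ge_0. lra.
  rewrite Rmult_1_l. apply sub_int; try lra. intros; apply cont_sq, Hc; lra.
  intros; apply pow2_ge_0.
Qed.

Lemma sup_bound (f f' : R -> R) :
  (forall y, 0 <= y <= 1 -> is_derive f y (f' y)) ->
  (forall y, 0 <= y <= 1 -> continuous f' y) ->
  forall x, 0 <= x <= 1 ->
  (f x)^2 <= 2 * RInt (fun y => f y ^ 2) 0 1 + 2 * RInt (fun y => f' y ^ 2) 0 1.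
Proof.
  intros Hd Hc x Hx.
  assert (Hcf : forall y, 0 <= y <= 1 -> continuous f y).
  { intros y Hy. apply exd_cont. eexists; apply Hd; auto. }
  assert (Hp : forall y, 0 <= y <= 1 -> (f x)^2 <= 2 * f y ^2 + 2 * RInt (fun z => f' z ^ 2) 0 1).
  { intros y Hy. assert (B : (f x - f y)^2 <= RInt (fun z => f' z ^ 2) 0 1).
    { destruct (Rle_dec y x).
      - apply diff_bound; auto; lra.
      - replace ((f x - f y)^2) with ((f y - f x)^2) by ring. apply diff_bound; auto; lra. }
    assert (Q : 0 <= (f y - (f x - f y))^2) by apply pow2_ge_0.
    assert (Q2 : (f x)^2 = 2 * f y ^ 2 + 2 * (f x - f y)^2 - (f y - (f x - f y))^2) by ring.
    lra. }
  set (F2 := RInt (fun z => f' z ^ 2) 0 1) in *.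
  assert (EE : @eq R (RInt (fun _ => (f x)^2) 0 1) ((f x)^2)) by (rewrite RInt_constR; ring).
  rewrite <- EE.
  replace (2 * RInt (fun y => f y ^ 2) 0 1 + 2 * F2) with
     (RInt (fun y => 2 * f y ^ 2 + 2 * F2) 0 1).
  2:{ rewrite RInt_plusR, RInt_scalR, RInt_constR. toR. ring.
      apply cont_ex; [lra|intros; apply cont_sq, Hcf; lra].
      apply ex_RInt_scalR, cont_ex; [lra|intros; apply cont_sq, Hcf; lra].
      apply ex_RInt_constR. }
  apply RInt_leR. lra. apply ex_RInt_constR.
  apply ex_RInt_plusR. apply ex_RInt_scalR, cont_ex; [lra|intros; apply cont_sq, Hcf; lra].
  apply ex_RInt_constR. auto.
Qed.
Lemma alg (Yd V Z Y G Rh B a1 a2 a3 a4 a5 : R) :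
  0 < Rh -> 0 <= B -> 0 <= V -> 0 <= Z -> 0 <= Y -> 0 <= G ->
  0 <= a1 -> 0 <= a2 -> 0 <= a3 -> 0 <= a4 -> 0 <= a5 ->
  V <= a1 * Y -> Z <= a2 * V + a3 -> V <= a4 * Z + a5 ->
  (forall l, 0 < l -> Yd <= -2 * G / Rh + B * ((2 * V + 2 * G) / l + l) * (V + Z) / 4) ->
  Yd <= - G / Rh + ((a4 + 1 + a5) / (2 * Rh) + (B ^ 2 * Rh * (a4 + 1 + a5) * (a1 + a2 * a1 + a3)
        + B * (a4 + 1 + a5)) / 4) * ((Z + 1) * (Y + 1)).
Proof.
  intros HR HB HV HZ HY HG h1 h2 h3 h4 h5 I1 I2 I3 H.
  remember (V + Z) as W eqn:EW. remember (a4 + 1 + a5) as w1 eqn:Ew1. remember (a1 + a2 * a1 + a3) as w2 eqn:Ew2.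
  assert (HW : 0 <= W) by lra.
  remember (B * W * Rh + 1) as l eqn:El.
  assert (Hl : 0 < l) by (rewrite El; assert (0 <= B * W * Rh) by (apply Rmult_le_pos; [apply Rmult_le_pos|]; lra); lra).
  specialize (H l Hl).
  assert (T1 : B * ((2 * V + 2 * G) / l) * W / 4 <= (2 * V + 2 * G) / (4 * Rh)).
  { assert (B * W * Rh <= l) by lra.
    assert (0 <= 2 * V + 2 * G) by lra.
    replace (B * ((2 * V + 2 * G) / l) * W / 4) with ((2 * V + 2 * G) * (B * W) / (4 * l)) by (field; lra).
    apply Rmult_le_reg_r with (4 * Rh * l). nra.
    replace ((2 * V + 2 * G) * (B * W) / (4 * l) * (4 * Rh * l)) with ((2 * V + 2 * G) * (B * W * Rh)) by (field; lra).
    replace ((2 * V + 2 * G) / (4 * Rh) * (4 * Rh * l)) with ((2 * V + 2 * G) * l) by (field; lra).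
    apply Rmult_le_compat_l; lra. }
  assert (T2 : B * l * W / 4 = (B ^ 2 * Rh * W ^ 2 + B * W) / 4) by (rewrite El; field).
  assert (Hsplit : B * ((2 * V + 2 * G) / l + l) * W / 4 = B * ((2 * V + 2 * G) / l) * W / 4 + B * l * W / 4) by (field; lra).
  assert (W1 : W <= w1 * (Z + 1)) by (subst; nra).
  assert (W2 : W <= w2 * (Y + 1)) by (subst; nra).
  assert (ZY : 1 <= (Z + 1) * (Y + 1)) by nra.
  assert (W1' : W <= w1 * ((Z + 1) * (Y + 1))).
  { apply Rle_trans with (w1 * (Z + 1)); auto. 
    assert (Z + 1 <= (Z + 1) * (Y + 1)) by nra. apply Rmult_le_compat_l; lra. }
  assert (WW : W ^ 2 <= w1 * w2 * ((Z + 1) * (Y + 1))).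
  { replace (W ^ 2) with (W * W) by ring.
    replace (w1 * w2 * ((Z + 1) * (Y + 1))) with ((w1 * (Z + 1)) * (w2 * (Y + 1))) by ring.
    apply Rmult_le_compat; auto. }
  assert (VV : V / (2 * Rh) <= w1 / (2 * Rh) * ((Z + 1) * (Y + 1))).
  { unfold Rdiv. replace (w1 * / (2 * Rh) * ((Z + 1) * (Y + 1))) with (w1 * ((Z + 1) * (Y + 1)) * / (2 * Rh)) by ring.
    apply Rmult_le_compat_r. left; apply Rinv_0_lt_compat; lra. lra. }
  assert (Q1 : B ^ 2 * Rh * W ^ 2 <= B ^ 2 * Rh * (w1 * w2 * ((Z + 1) * (Y + 1)))).
  { apply Rmult_le_compat_l; auto. apply Rmult_le_pos; [apply pow2_ge_0|lra]. }
  assert (Q2 : B * W <= B * (w1 * ((Z + 1) * (Y + 1)))) by (apply Rmult_le_compat_l; auto).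
  assert (GG : (2 * V + 2 * G) / (4 * Rh) = V / (2 * Rh) + G / (2 * Rh)) by (field; lra).
  assert (G2 : 0 <= G / (2 * Rh)) by (apply Rdiv_le_0_compat; lra).
  assert (G3 : -2 * G / Rh + G / (2 * Rh) <= - G / Rh) by (unfold Rdiv; assert (0 <= G * / Rh) by (apply Rmult_le_pos; [lra|left; apply Rinv_0_lt_compat; lra]); 
     replace (-2 * G * / Rh + G * / (2 * Rh)) with (- G * / Rh - (G * / Rh) / 2) by (field; lra); lra).

  rewrite Hsplit, T2 in H.
  assert (E : ((w1 / (2 * Rh) + (B ^ 2 * Rh * w1 * w2 + B * w1) / 4) * ((Z + 1) * (Y + 1))) =
      w1 / (2 * Rh) * ((Z + 1) * (Y + 1)) + (B ^ 2 * Rh * (w1 * w2 * ((Z + 1) * (Y + 1))) + B * (w1 * ((Z + 1) * (Y + 1)))) / 4) by (field; lra).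
  rewrite E. lra.
Qed.

Lemma pt_alg (b B a w S l : R) : 0 < b <= B -> a ^ 2 <= S -> 0 < l ->
  - (b * a ^ 2 * w) <= B * ((S / l + l) / 2) * ((a ^ 2 + w ^ 2) / 2).
Proof.
  intros Hb Ha Hl.
  assert (A1 : Rabs a <= (S / l + l) / 2).
  { assert (2 * l * Rabs a <= a ^ 2 + l ^ 2).
    { pose proof (pow2_ge_0 (Rabs a - l)). rewrite <- (pow2_abs a). nra. }
    apply Rmult_le_reg_l with (2 * l). lra.
    replace (2 * l * ((S / l + l) / 2)) with (S + l ^ 2) by (field; lra). lra. }
  assert (A2 : Rabs a * Rabs w <= (a ^ 2 + w ^ 2) / 2).
  { pose proof (pow2_ge_0 (Rabs a - Rabs w)). rewrite <- (pow2_abs a), <- (pow2_abs w). nra. }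
  assert (A3 : - (b * a ^ 2 * w) <= b * (Rabs a * (Rabs a * Rabs w))).
  { replace (Rabs a * (Rabs a * Rabs w)) with (a ^ 2 * Rabs w) by (rewrite <- (pow2_abs a); ring).
    assert (- w <= Rabs w) by (rewrite <- Rabs_Ropp; apply Rle_abs).
    pose proof (pow2_ge_0 a). 
    replace (- (b * a ^ 2 * w)) with (b * (a ^ 2 * (- w))) by ring.
    apply Rmult_le_compat_l. lra. apply Rmult_le_compat_l; lra. }
  assert (A4 : Rabs a * (Rabs a * Rabs w) <= ((S / l + l) / 2) * ((a ^ 2 + w ^ 2) / 2)).
  { apply Rmult_le_compat; auto. apply Rabs_pos. apply Rmult_le_pos; apply Rabs_pos. }
  assert (A5 : 0 <= Rabs a * (Rabs a * Rabs w)) by (apply Rmult_le_pos; [|apply Rmult_le_pos]; apply Rabs_pos).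
  apply Rle_trans with (b * (Rabs a * (Rabs a * Rabs w))); auto.
  replace (B * ((S / l + l) / 2) * ((a ^ 2 + w ^ 2) / 2)) with (B * (((S / l + l) / 2) * ((a ^ 2 + w ^ 2) / 2))) by ring.
  apply Rmult_le_compat; lra.
Qed.

Lemma sq_sum (a b : R) : (a + b) ^ 2 <= 2 * a ^ 2 + 2 * b ^ 2.
Proof. pose proof (pow2_ge_0 (a - b)). nra. Qed.
Lemma cont_divp1 (f g : R -> R) x : continuous f x -> continuous g x -> 0 < g x + 1 ->
  continuous (fun s => f s / (g s + 1)) x.
Proof.
  intros Hf Hg Hp.
  apply continuity_pt_filterlim. apply continuity_pt_filterlim in Hf. apply continuity_pt_filterlim in Hg.
  apply (continuity_pt_ext (fun s => (f s) * / (g s + 1))). intros; reflexivity.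
  apply (continuity_pt_mult f (fun s => / (g s + 1))); auto.
  apply (continuity_pt_inv (fun s => g s + 1)). apply (continuity_pt_plus g (fun _ => 1)); auto.
  apply continuity_pt_const. intros a b; reflexivity. lra.
Qed.

Lemma Dw_app (w w' : list bool) f : Dw (w ++ w') f = Dw w (Dw w' f).
Proof. induction w as [|b w IH]; simpl; auto. rewrite IH; auto. Qed.

Lemma smooth_dx f : smooth f -> smooth (pDx f).
Proof. intros H w. change (pDx f) with (Dw (false :: nil) f). rewrite <- Dw_app. apply H. Qed.
Lemma smooth_dt f : smooth f -> smooth (pDt f).
Proof. intros H w. change (pDt f) with (Dw (true :: nil) f). rewrite <- Dw_app. apply H. Qed.

Lemma sm_dx F : smooth F -> forall t x, ex_derive (fun y => F t y) x.
Proof. intros H t x. exact (proj2 (proj1 (H nil) t x)). Qed.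
Lemma sm_dt F : smooth F -> forall t x, ex_derive (fun s => F s x) t.
Proof. intros H t x. exact (proj1 (proj1 (H nil) t x)). Qed.
Lemma sm_c2 F : smooth F -> forall t x, continuity_2d_pt F t x.
Proof. intros H t x. apply continuity_2d_pt_filterlim. exact (proj2 (H nil) t x). Qed.

Lemma per_dx f : smooth f -> periodic1 f -> periodic1 (pDx f).
Proof.
  intros Hs Hp t x. unfold pDx.
  assert (E : is_derive (fun y => f t (y + 1)) x (Derive (fun y => f t y) (x + 1))).
  { replace (Derive (fun y => f t y) (x + 1)) with (1 * Derive (fun y => f t y) (x + 1)) by ring.
    apply (is_derive_comp (fun y => f t y) (fun y => y + 1)).
    apply Derive_correct. apply sm_dx; auto.
    auto_derive; auto. }
  apply is_derive_unique in E. rewrite <- E. apply Derive_ext. intros y; apply Hp.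
Qed.

Lemma per_dt f : periodic1 f -> periodic1 (pDt f).
Proof. intros Hp t x. unfold pDt. apply Derive_ext. intros s; apply Hp. Qed.

Ltac smt := lazymatch goal with
 | |- smooth (pDx ?f) => apply smooth_dx; smt
 | |- smooth (pDt ?f) => apply smooth_dt; smt
 | |- smooth ?f => assumption end.
Ltac pert := repeat (first [assumption | apply per_dt | apply per_dx | apply smooth_dx | apply smooth_dt]).
Ltac exd := match goal with
 | |- ex_derive (fun _ => ?F ?t _) _ => apply (sm_dx F); smt
 | |- ex_derive (fun _ => ?F _ ?x) _ => apply (sm_dt F); smt end.
Ltac exds := repeat split; try exd; try (intro; lra).
Ltac c2t := repeat (first [ apply continuity_2d_pt_const | apply continuity_2d_pt_plus | apply continuity_2d_pt_minus
   | apply continuity_2d_pt_mult | apply continuity_2d_pt_opp | apply c2_div | apply c2_pow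
   | apply continuity_2d_pt_inv | (apply sm_c2; smt) ]).

Section Main.
Variables mu_p mu_m gam_p gam_m cv_p cv_m T rho_lo rho_hi th_lo th_hi : R.
Hypothesis Hmp : 0 < mu_p.
Hypothesis Hmm : 0 < mu_m.
Hypothesis Hgp : 1 < gam_p.
Hypothesis Hgm : 1 < gam_m.
Hypothesis Hcp : 0 < cv_p.
Hypothesis Hcm : 0 < cv_m.
Hypothesis HT : 0 < T.
Hypothesis Hrl : 0 < rho_lo.
Hypothesis Hrh : 0 < rho_hi.
Hypothesis Htl : 0 < th_lo.
Hypothesis Hth : 0 < th_hi.
Variables c rho theta u : field.
Hypothesis Sc : smooth c.
Hypothesis Sr : smooth rho.
Hypothesis St : smooth theta.
Hypothesis Su : smooth u.
Hypothesis Pc : periodic1 c.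
Hypothesis Pr : periodic1 rho.
Hypothesis Pt : periodic1 theta.
Hypothesis Pu : periodic1 u.
Hypothesis HNS : NS_system mu_p mu_m gam_p gam_m cv_p cv_m T c rho theta u.
Hypothesis Bc : forall t x, 0 <= t <= T -> 0 <= c t x <= 1.
Hypothesis Br : forall t x, 0 <= t <= T -> rho_lo <= rho t x <= rho_hi.
Hypothesis Bt : forall t x, 0 <= t <= T -> th_lo <= theta t x <= th_hi.

Definition mu s y := muc mu_p mu_m (c s y).
Definition ga s y := gamc gam_p gam_m (c s y).
Definition cv s y := cvc cv_p cv_m (c s y).
Definition sg s y := sigmaNS mu_p mu_m gam_p gam_m c rho theta u s y.
Definition EE s y := energyNS cv_p cv_m c theta u s y.
Definition sx s y := (mu_p - mu_m) * pDx c s y * pDx u s y + mu s y * pDx (pDx u) s y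
   - ((gam_p - gam_m) * pDx c s y * rho s y * theta s y
      + (ga s y - 1) * (pDx rho s y * theta s y + rho s y * pDx theta s y)).

Ltac unf := unfold sx, sg, EE, mu, ga, cv, sigmaNS, energyNS, pres, muc, gamc, cvc, mix in *.

Lemma X1 t x : pDx (fun s y => rho s y * u s y) t x = pDx rho t x * u t x + rho t x * pDx u t x.
Proof. unfold pDx at 1. apply is_derive_unique. auto_derive. exds. unfold pDx; field. Qed.

Lemma X2a t x : pDt (fun s y => rho s y * c s y) t x = pDt rho t x * c t x + rho t x * pDt c t x.
Proof. unfold pDt at 1. apply is_derive_unique. auto_derive. exds. unfold pDt; field. Qed.

Lemma X2b t x : pDx (fun s y => rho s y * c s y * u s y) t x =
  pDx rho t x * c t x * u t x + rho t x * pDx c t x * u t x + rho t x * c t x * pDx u t x.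
Proof. unfold pDx at 1. apply is_derive_unique. auto_derive. exds. unfold pDx; field. Qed.

Lemma X3a t x : pDt (fun s y => rho s y * u s y) t x = pDt rho t x * u t x + rho t x * pDt u t x.
Proof. unfold pDt at 1. apply is_derive_unique. auto_derive. exds. unfold pDt; field. Qed.

Lemma X3b t x : pDx (fun s y => rho s y * u s y ^ 2) t x =
  pDx rho t x * u t x ^ 2 + 2 * rho t x * u t x * pDx u t x.
Proof. unfold pDx at 1. apply is_derive_unique. auto_derive. exds. unfold pDx; field. Qed.

Lemma X3c t x : pDx sg t x = sx t x.
Proof. unfold pDx at 1. apply is_derive_unique. unf. auto_derive. exds. unfold pDx; field. Qed.


Lemma X4a t x : pDt (fun s y => rho s y * energyNS cv_p cv_m c theta u s y) t x =
  pDt rho t x * EE t x + rho t x * (u t x * pDt u t x + (cv_p - cv_m) * pDt c t x * theta t x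
     + cv t x * pDt theta t x).
Proof. unfold pDt at 1. apply is_derive_unique. unf. auto_derive. exds. unfold pDt; field. Qed.

Lemma X4b t x : pDx (fun s y => rho s y * energyNS cv_p cv_m c theta u s y * u s y) t x =
  pDx rho t x * EE t x * u t x + rho t x * (u t x * pDx u t x + (cv_p - cv_m) * pDx c t x * theta t x
     + cv t x * pDx theta t x) * u t x + rho t x * EE t x * pDx u t x.
Proof. unfold pDx at 1. apply is_derive_unique. unf. auto_derive. exds. unfold pDx; field. Qed.

Lemma X4c t x : pDx (fun s y => sigmaNS mu_p mu_m gam_p gam_m c rho theta u s y * u s y) t x =
  sx t x * u t x + sg t x * pDx u t x.
Proof. unfold pDx at 1. apply is_derive_unique. unf. auto_derive. exds. unfold pDx; field. Qed.

Lemma mix_bounds a b z : 0 <= z <= 1 -> Rmin a b <= mix a b z <= Rmax a b.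
Proof.
  intros Hz. unfold mix. pose proof (Rmin_l a b). pose proof (Rmin_r a b).
  pose proof (Rmax_l a b). pose proof (Rmax_r a b). split; nra.
Qed.

Definition mlo := Rmin mu_p mu_m.
Definition mhi := Rmax mu_p mu_m.
Definition glo := Rmin gam_p gam_m.
Definition ghi := Rmax gam_p gam_m.
Definition cvlo := Rmin cv_p cv_m.
Definition cvhi := Rmax cv_p cv_m.

Lemma mlo_pos : 0 < mlo. Proof. unfold mlo, Rmin; destruct Rle_dec; lra. Qed.
Lemma glo_gt1 : 1 < glo. Proof. unfold glo, Rmin; destruct Rle_dec; lra. Qed.
Lemma cvlo_pos : 0 < cvlo. Proof. unfold cvlo, Rmin; destruct Rle_dec; lra. Qed.
Lemma mlo_mhi : mlo <= mhi. Proof. unfold mlo, mhi, Rmin, Rmax; destruct Rle_dec; lra. Qed.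
Lemma glo_ghi : glo <= ghi. Proof. unfold glo, ghi, Rmin, Rmax; destruct Rle_dec; lra. Qed.
Lemma cvlo_cvhi : cvlo <= cvhi. Proof. unfold cvlo, cvhi, Rmin, Rmax; destruct Rle_dec; lra. Qed.

Lemma B_mu t x : 0 <= t <= T -> mlo <= mu t x <= mhi.
Proof. intros Ht. apply mix_bounds, Bc, Ht. Qed.
Lemma B_ga t x : 0 <= t <= T -> glo <= ga t x <= ghi.
Proof. intros Ht. apply mix_bounds, Bc, Ht. Qed.
Lemma B_cv t x : 0 <= t <= T -> cvlo <= cv t x <= cvhi.
Proof. intros Ht. apply mix_bounds, Bc, Ht. Qed.

Lemma ND t x : 0 <= t <= T ->
  pDt rho t x = - pDx rho t x * u t x - rho t x * pDx u t x /\
  pDt c t x = - u t x * pDx c t x /\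
  pDt u t x = sx t x / rho t x - u t x * pDx u t x /\
  pDt theta t x = sg t x * pDx u t x / (rho t x * cv t x) - u t x * pDx theta t x.
Proof.
  intros Ht. destruct (HNS t x Ht) as [E1 [E2 [E3 E4]]].
  rewrite X1 in E1. rewrite X2a, X2b in E2. rewrite X3a, X3b in E3.
  change (pDx (sigmaNS mu_p mu_m gam_p gam_m c rho theta u) t x) with (pDx sg t x) in E3.
  rewrite X3c in E3. rewrite X4a, X4b, X4c in E4.
  pose proof (Br t x Ht) as Hr. pose proof (B_cv t x Ht) as Hcv. pose proof cvlo_pos.
  assert (Rr : rho t x <> 0) by lra. assert (Rc : cv t x <> 0) by lra.
  set (r := rho t x) in *. set (rx := pDx rho t x) in *. set (rt := pDt rho t x) in *.
  set (cc := c t x) in *. set (cx := pDx c t x) in *. set (ct := pDt c t x) in *.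
  set (uu := u t x) in *. set (ux := pDx u t x) in *. set (ut := pDt u t x) in *.
  set (th := theta t x) in *. set (thx := pDx theta t x) in *. set (tht := pDt theta t x) in *.
  set (e := EE t x) in *. set (sxx := sx t x) in *. set (s := sg t x) in *. set (k := cv t x) in *.
  assert (D1 : rt = - rx * uu - r * ux) by lra.
  assert (D2 : ct = - uu * cx).
  { assert (r * (ct + uu * cx) = 0).
    { replace (r * (ct + uu * cx)) with ((rt * cc + r * ct + (rx * cc * uu + r * cx * uu + r * cc * ux)) - cc * (rt + (rx * uu + r * ux))) by ring.
      rewrite E2, E1; ring. }
    apply Rmult_integral in H0. destruct H0; [contradiction|lra]. }
  assert (D3 : ut = sxx / r - uu * ux).
  { assert (r * (ut + uu * ux) = sxx).
    { rewrite <- E3. replace (rt * uu + r * ut + (rx * uu ^ 2 + 2 * r * uu * ux)) with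
        (r * (ut + uu * ux) + uu * (rt + (rx * uu + r * ux))) by ring. rewrite E1; ring. }
    rewrite <- H0. field. auto. }
  assert (D4 : tht = s * ux / (r * k) - uu * thx).
  { assert (r * k * (tht + uu * thx) = s * ux).
    { replace (r * k * (tht + uu * thx)) with
        ((rt * e + r * (uu * ut + (cv_p - cv_m) * ct * th + k * tht) +
          (rx * e * uu + r * (uu * ux + (cv_p - cv_m) * cx * th + k * thx) * uu + r * e * ux))
         - e * (rt + (rx * uu + r * ux)) - uu * (r * (ut + uu * ux)) - r * (cv_p - cv_m) * th * (ct + uu * cx)) by ring.
      rewrite E4, E1. rewrite D3, D2. field. auto. }
    rewrite <- H0. field. auto. }
  auto.
Qed.

Definition pr s y := (ga s y - 1) * rho s y * theta s y.
Definition Pm := (ghi - 1) * rho_hi * th_hi.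

Lemma sg_eq s y : sg s y = mu s y * pDx u s y - pr s y.
Proof. reflexivity. Qed.

Lemma B_pr t x : 0 <= t <= T -> 0 <= pr t x <= Pm.
Proof.
  intros Ht. unfold pr, Pm. pose proof (B_ga t x Ht). pose proof (Br t x Ht). pose proof (Bt t x Ht).
  pose proof glo_gt1. split.
  - apply Rmult_le_pos; [apply Rmult_le_pos|]; lra.
  - apply Rmult_le_compat; [apply Rmult_le_pos; lra|lra| |lra].
    apply Rmult_le_compat; lra.
Qed.

Lemma Pm_pos : 0 <= Pm.
Proof. unfold Pm. pose proof glo_gt1. pose proof glo_ghi. apply Rmult_le_pos; [apply Rmult_le_pos|]; lra. Qed.

Definition FJ s y := rho s y * cv s y * theta s y.
Definition dJ s y := pDt rho s y * cv s y * theta s y + rho s y * (cv_p - cv_m) * pDt c s y * theta s y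
   + rho s y * cv s y * pDt theta s y.
Definition HJ s y := rho s y * cv s y * theta s y * u s y.
Definition HJx s y := pDx rho s y * cv s y * theta s y * u s y + rho s y * (cv_p - cv_m) * pDx c s y * theta s y * u s y
   + rho s y * cv s y * pDx theta s y * u s y + rho s y * cv s y * theta s y * pDx u s y.

Lemma FJ_der s y : is_derive (fun z => FJ z y) s (dJ s y).
Proof. unfold FJ, dJ, cv, cvc, mix. auto_derive. exds. unfold pDt; field. Qed.

Lemma HJ_der t y : is_derive (fun z => HJ t z) y (HJx t y).
Proof. unfold HJ, HJx, cv, cvc, mix. auto_derive. exds. unfold pDx; field. Qed.

Lemma c2_FJ s y : continuity_2d_pt FJ s y.
Proof. unfold FJ, cv, cvc, mix. c2t. Qed.
Lemma c2_dJ s y : continuity_2d_pt dJ s y.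
Proof. unfold dJ, cv, cvc, mix. c2t. Qed.
Lemma c2_HJx s y : continuity_2d_pt HJx s y.
Proof. unfold HJx, cv, cvc, mix. c2t. Qed.

Lemma c2_sg s y : continuity_2d_pt sg s y.
Proof. unfold sg, sigmaNS, pres, muc, gamc, mix. c2t. Qed.

Lemma dJ_id t y : 0 <= t <= T -> dJ t y = sg t y * pDx u t y - HJx t y.
Proof.
  intros Ht. destruct (ND t y Ht) as [D1 [D2 [D3 D4]]].
  pose proof (Br t y Ht). pose proof (B_cv t y Ht). pose proof cvlo_pos.
  unfold dJ, HJx. rewrite D1, D2, D4. field. split; lra.
Qed.

Definition J s := RInt (fun y => FJ s y) 0 1.
Definition Jd s := RInt (fun y => dJ s y) 0 1.

Lemma J_der s : is_derive J s (Jd s).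
Proof.
  apply (param_deriv FJ dJ s 1). lra.
  intros; apply FJ_der. intros; split; [apply c2_FJ|apply c2_dJ].
Qed.

Lemma Jd_cont s : continuous Jd s.
Proof. apply RInt_cont_param. exists 1; split; [lra|]. intros; apply c2_dJ. Qed.

Lemma HJ_per t : HJ t 1 = HJ t 0.
Proof. unfold HJ, cv, cvc, mix. replace 1 with (0 + 1) by ring. rewrite Pr, Pt, Pu, Pc. auto. Qed.

Lemma int_HJx t : RInt (fun y => HJx t y) 0 1 = 0.
Proof.
  apply (zero_int (fun y => HJ t y)). intros; apply HJ_der.
  intros; apply c2_xc, c2_HJx. apply HJ_per.
Qed.

Lemma ex_c2 (G : R -> R -> R) t : (forall y, continuity_2d_pt G t y) -> ex_RInt (fun y => G t y) 0 1.
Proof. intros H. apply ex_RInt_c2. lra. intros; apply H. Qed.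

Definition Z s := RInt (fun y => pDx u s y ^ 2) 0 1.

Lemma Z_cont s : continuous Z s.
Proof. apply RInt_cont_param. exists 1; split; [lra|]. intros. c2t. Qed.

Lemma Jd_lower t : 0 <= t <= T -> mlo / 2 * Z t - Pm ^ 2 / (2 * mlo) <= Jd t.
Proof.
  intros Ht. pose proof mlo_pos.
  assert (EA : ex_RInt (fun y => sg t y * pDx u t y) 0 1).
  { apply (ex_c2 (fun s y => sg s y * pDx u s y)); intros. apply continuity_2d_pt_mult. apply c2_sg. c2t. }
  assert (EB : ex_RInt (fun y => HJx t y) 0 1) by (apply (ex_c2 HJx); intros; apply c2_HJx).
  assert (EC : ex_RInt (fun y => pDx u t y ^ 2) 0 1).
  { apply (ex_c2 (fun s y => pDx u s y ^ 2)); intros. c2t. }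
  unfold Jd. rewrite (RInt_extR _ (fun y => sg t y * pDx u t y - HJx t y)).
  2: lra. 2:{ intros y Hy. apply dJ_id; auto. }
  rewrite RInt_minusR by auto. rewrite int_HJx. rewrite Rminus_0_r.
  unfold Z. rewrite <- RInt_scalR by auto.
  replace (Pm ^ 2 / (2 * mlo)) with (Pm ^ 2 / (2 * mlo) * (1 - 0)) by ring.
  rewrite <- RInt_constR. rewrite <- RInt_minusR.
  2:{ apply ex_RInt_scalR; auto. } 2:{ apply ex_RInt_constR. }
  apply RInt_leR; auto. lra.
  { apply ex_RInt_minusR. apply ex_RInt_scalR; auto. apply ex_RInt_constR. }
  intros y Hy. rewrite sg_eq. pose proof (B_mu t y Ht). pose proof (B_pr t y Ht). pose proof Pm_pos.
  set (m := mu t y) in *. set (p := pr t y) in *. set (v := pDx u t y).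
  clear EA EB EC.
  assert (A : p * v <= m * v ^ 2 / 2 + p ^ 2 / (2 * m)).
  { assert (0 <= (m * v - p) ^ 2 / (2 * m)) by (apply Rdiv_le_0_compat; [apply pow2_ge_0|lra]).
    replace (m * v ^ 2 / 2 + p ^ 2 / (2 * m)) with (p * v + (m * v - p) ^ 2 / (2 * m)) by (field; lra). lra. }
  assert (B1 : mlo / 2 * v ^ 2 <= m * v ^ 2 / 2).
  { pose proof (pow2_ge_0 v). assert (mlo * v^2 <= m * v^2) by (apply Rmult_le_compat_r; lra). lra. }
  assert (B2 : p ^ 2 / (2 * m) <= Pm ^ 2 / (2 * mlo)).
  { unfold Rdiv. apply Rmult_le_compat. pose proof (pow2_ge_0 p); lra.
    left; apply Rinv_0_lt_compat; lra. apply pow_incr; lra.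
    apply Rinv_le_contravar; lra. }
  replace ((m * v - p) * v) with (m * v ^ 2 - p * v) by ring. lra.
Qed.

Definition Jhi := rho_hi * cvhi * th_hi.
Definition K := 2 / mlo * (Jhi + T * (Pm ^ 2 / (2 * mlo))).

Lemma J_bounds t : 0 <= t <= T -> 0 <= J t <= Jhi.
Proof.
  intros Ht. unfold J. assert (E : ex_RInt (fun y => FJ t y) 0 1) by (apply (ex_c2 FJ); intros; apply c2_FJ).
  split.
  - apply RInt_ge0; auto. lra. intros y Hy. unfold FJ. pose proof (Br t y Ht). pose proof (B_cv t y Ht).
    pose proof (Bt t y Ht). pose proof cvlo_pos. apply Rmult_le_pos; [apply Rmult_le_pos|]; lra.
  - replace Jhi with (RInt (fun _ => Jhi) 0 1) by (rewrite RInt_constR; toR; ring).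
    apply RInt_leR; auto. lra. apply ex_RInt_constR. intros y Hy. unfold FJ, Jhi.
    pose proof (Br t y Ht). pose proof (B_cv t y Ht). pose proof (Bt t y Ht). pose proof cvlo_pos.
    apply Rmult_le_compat; [apply Rmult_le_pos; lra|lra| |lra]. apply Rmult_le_compat; lra.
Qed.

Lemma Z_ge0 t : 0 <= Z t.
Proof. unfold Z. apply RInt_ge0. lra. apply (ex_c2 (fun s y => pDx u s y ^ 2)); intros; c2t. intros; apply pow2_ge_0. Qed.

Lemma ex_Z a b : a <= b -> ex_RInt Z a b.
Proof. intros Hab. apply cont_ex; auto. intros; apply Z_cont. Qed.

Lemma Z_int t1 : 0 <= t1 <= T -> RInt Z 0 t1 <= K.
Proof.
  intros Ht. pose proof mlo_pos. pose proof Pm_pos.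
  assert (F : RInt Jd 0 t1 = J t1 - J 0).
  { apply FTC. lra. intros; apply J_der. intros; apply Jd_cont. }
  assert (L : RInt (fun s => mlo / 2 * Z s - Pm ^ 2 / (2 * mlo)) 0 t1 <= RInt Jd 0 t1).
  { apply RInt_leR. lra. apply ex_RInt_minusR. apply ex_RInt_scalR, ex_Z; lra. apply ex_RInt_constR.
    apply cont_ex. lra. intros; apply Jd_cont. intros; apply Jd_lower; lra. }
  rewrite RInt_minusR, RInt_scalR, RInt_constR in L. 2: apply ex_Z; lra.
  2: apply ex_RInt_scalR, ex_Z; lra. 2: apply ex_RInt_constR.
  pose proof (J_bounds t1 Ht). pose proof (J_bounds 0 ltac:(lra)).
  unfold K. apply Rmult_le_reg_l with (mlo / 2). apply Rdiv_lt_0_compat; lra.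
  replace (mlo / 2 * (2 / mlo * (Jhi + T * (Pm ^ 2 / (2 * mlo))))) with (Jhi + T * (Pm ^ 2 / (2 * mlo)))
    by (field; lra).
  assert (0 <= Pm ^ 2 / (2 * mlo)) by (apply Rdiv_le_0_compat; [apply pow2_ge_0|lra]).
  assert (t1 * (Pm ^ 2 / (2 * mlo)) <= T * (Pm ^ 2 / (2 * mlo))) by (apply Rmult_le_compat_r; lra).
  lra.
Qed.

Definition st s y := (mu_p - mu_m) * pDt c s y * pDx u s y + mu s y * pDt (pDx u) s y
   - ((gam_p - gam_m) * pDt c s y * rho s y * theta s y
      + (ga s y - 1) * (pDt rho s y * theta s y + rho s y * pDt theta s y)).
Definition FY s y := sg s y ^ 2 / mu s y.
Definition dY s y := (2 * sg s y * st s y * mu s y - sg s y ^ 2 * ((mu_p - mu_m) * pDt c s y)) / mu s y ^ 2.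
Definition HY s y := u s y * sg s y ^ 2 / mu s y.
Definition HYx s y := (pDx u s y * sg s y ^ 2 + 2 * u s y * sg s y * sx s y) / mu s y
   - u s y * sg s y ^ 2 * ((mu_p - mu_m) * pDx c s y) / mu s y ^ 2.
Definition Q s y := pDt u s y + u s y * pDx u s y.
Definition Qx s y := pDx (pDt u) s y + pDx u s y ^ 2 + u s y * pDx (pDx u) s y.
Definition bb s y := (1 + 2 * ((ga s y - 1) / cv s y)) / mu s y.

Lemma FY_der s y : mu s y <> 0 -> is_derive (fun z => FY z y) s (dY s y).
Proof. intros Hm. unfold FY, dY, st, sg, sigmaNS, pres, mu, ga, muc, gamc, mix in *. auto_derive.
  exds. unfold pDt; field. auto. Qed.

Lemma HY_der t y : mu t y <> 0 -> is_derive (fun z => HY t z) y (HYx t y).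
Proof. intros Hm. unfold HY, HYx, sx, sg, sigmaNS, pres, mu, ga, muc, gamc, mix in *. auto_derive.
  exds. unfold pDx; field. auto. Qed.

Lemma sg_der t y : is_derive (fun z => sg t z) y (sx t y).
Proof. unfold sx, sg, sigmaNS, pres, mu, ga, muc, gamc, mix in *. auto_derive.
  exds. unfold pDx; field. Qed.

Lemma Q_der t y : is_derive (fun z => Q t z) y (Qx t y).
Proof. unfold Q, Qx. auto_derive. exds. unfold pDx; field. Qed.

Lemma schwarz_u t x : pDt (pDx u) t x = pDx (pDt u) t x.
Proof.
  unfold pDt, pDx. apply (Schwarz u t x).
  - exists (mkposreal 1 Rlt_0_1). intros; repeat split.
    + apply (sm_dt u Su). + apply (sm_dx u Su).
    + apply (sm_dt (pDx u)); smt. + apply (sm_dx (pDt u)); smt.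
  - apply (sm_c2 (pDt (pDx u))); smt.
  - apply (sm_c2 (pDx (pDt u))); smt.
Qed.

Lemma dY_id t y : 0 <= t <= T ->
  dY t y = - HYx t y + 2 * sg t y * Qx t y - bb t y * sg t y ^ 2 * pDx u t y.
Proof.
  intros Ht. destruct (ND t y Ht) as [D1 [D2 [D3 D4]]].
  pose proof (Br t y Ht). pose proof (B_cv t y Ht). pose proof cvlo_pos. pose proof (B_mu t y Ht). pose proof mlo_pos.
  unfold dY, HYx, Qx, bb, st. rewrite schwarz_u. rewrite D1, D2, D4.
  unfold sx, sg, sigmaNS, pres. fold (mu t y) (ga t y).
  field. repeat split; lra.
Qed.

Lemma c2_mu s y : continuity_2d_pt mu s y.
Proof. unfold mu, muc, mix. c2t. Qed.

Lemma mu_pos_near t0 : 0 <= t0 <= T -> exists d, 0 < d /\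
  forall s y, Rabs (s - t0) < d -> -1 <= y <= 2 -> mlo / 2 < mu s y.
Proof.
  intros Ht. pose proof mlo_pos.
  destruct (unif_t mu (-1) 2 t0 (fun y _ => c2_mu t0 y) (mlo/2) ltac:(lra)) as [d [Hd H']].
  exists d; split; auto. intros s y Hs Hy. specialize (H' s y Hs Hy).
  pose proof (B_mu t0 y Ht). apply Rabs_def2 in H'. lra.
Qed.

Lemma c2_FY s y : mu s y <> 0 -> continuity_2d_pt FY s y.
Proof. intros Hm. unfold FY. apply c2_div; auto. apply c2_pow, c2_sg. apply c2_mu. Qed.

Lemma c2_st s y : continuity_2d_pt st s y.
Proof. unfold st, mu, ga, muc, gamc, mix. c2t. Qed.

Lemma c2_dY s y : mu s y <> 0 -> continuity_2d_pt dY s y.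
Proof. intros Hm. unfold dY. apply c2_div.
  - apply continuity_2d_pt_minus. apply continuity_2d_pt_mult. apply continuity_2d_pt_mult.
    apply continuity_2d_pt_mult. c2t. apply c2_sg. apply c2_st. apply c2_mu.
    apply continuity_2d_pt_mult. apply c2_pow, c2_sg. c2t.
  - apply c2_pow, c2_mu.
  - apply pow_nonzero; auto.
Qed.

Definition Y s := RInt (fun y => FY s y) 0 1.
Definition Yd s := RInt (fun y => dY s y) 0 1.

Lemma Y_der t0 : 0 <= t0 <= T -> is_derive Y t0 (Yd t0).
Proof.
  intros Ht. pose proof mlo_pos. destruct (mu_pos_near t0 Ht) as [d [Hd H']].
  apply (param_deriv FY dY t0 d Hd).
  - intros s y Hs Hy. apply FY_der. specialize (H' s y Hs ltac:(lra)). lra.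
  - intros s y Hs Hy. specialize (H' s y Hs ltac:(lra)). split; [apply c2_FY|apply c2_dY]; lra.
Qed.

Lemma Yd_cont t0 : 0 <= t0 <= T -> continuous Yd t0.
Proof.
  intros Ht. pose proof mlo_pos. destruct (mu_pos_near t0 Ht) as [d [Hd H']].
  apply RInt_cont_param. exists d; split; auto. intros s y Hs Hy.
  specialize (H' s y Hs ltac:(lra)). apply c2_dY; lra.
Qed.

Lemma Y_cont t0 : 0 <= t0 <= T -> continuous Y t0.
Proof. intros Ht. apply exd_cont. eexists; apply Y_der; auto. Qed.

Lemma mu_nz t y : 0 <= t <= T -> mu t y <> 0.
Proof. intros Ht. pose proof (B_mu t y Ht). pose proof mlo_pos. lra. Qed.
Lemma rho_nz t y : 0 <= t <= T -> rho t y <> 0.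
Proof. intros Ht. pose proof (Br t y Ht). lra. Qed.
Lemma cv_nz t y : 0 <= t <= T -> cv t y <> 0.
Proof. intros Ht. pose proof (B_cv t y Ht). pose proof cvlo_pos. lra. Qed.

Lemma c2_HYx t y : 0 <= t <= T -> continuity_2d_pt HYx t y.
Proof.
  intros Ht. pose proof (mu_nz t y Ht). unfold HYx.
  apply continuity_2d_pt_minus; apply c2_div.
  - apply continuity_2d_pt_plus. apply continuity_2d_pt_mult. c2t. apply c2_pow, c2_sg.
    apply continuity_2d_pt_mult. apply continuity_2d_pt_mult. c2t. apply c2_sg.
    unfold sx, mu, ga, muc, gamc, mix. c2t.
  - apply c2_mu.
  - auto.
  - apply continuity_2d_pt_mult. apply continuity_2d_pt_mult. c2t. apply c2_pow, c2_sg. c2t.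
  - apply c2_pow, c2_mu.
  - apply pow_nonzero; auto.
Qed.

Lemma c2_sx s y : continuity_2d_pt sx s y.
Proof. unfold sx, mu, ga, muc, gamc, mix. c2t. Qed.
Lemma c2_Q s y : continuity_2d_pt Q s y.
Proof. unfold Q. c2t. Qed.
Lemma c2_Qx s y : continuity_2d_pt Qx s y.
Proof. unfold Qx. c2t. Qed.

Lemma c2_bb t y : 0 <= t <= T -> continuity_2d_pt bb t y.
Proof.
  intros Ht. pose proof (mu_nz t y Ht). pose proof (cv_nz t y Ht). unfold bb.
  apply c2_div; auto. apply continuity_2d_pt_plus. c2t. apply continuity_2d_pt_mult. c2t.
  apply c2_div; auto. unfold ga, gamc, mix; c2t. unfold cv, cvc, mix; c2t. apply c2_mu.
Qed.

Lemma per_u1 t : u t 1 = u t 0 /\ pDx u t 1 = pDx u t 0 /\ c t 1 = c t 0 /\ rho t 1 = rho t 0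
  /\ theta t 1 = theta t 0 /\ pDt u t 1 = pDt u t 0.
Proof.
  replace 1 with (0 + 1) by ring. repeat split.
  apply Pu. apply per_dx; auto. apply Pc. apply Pr. apply Pt. apply per_dt; auto.
Qed.

Lemma sg_per t : sg t 1 = sg t 0.
Proof. destruct (per_u1 t) as [A [B [C [D [E F]]]]]. unfold sg, sigmaNS, pres. rewrite B, C, D, E. auto. Qed.

Lemma int_HYx t : 0 <= t <= T -> RInt (fun y => HYx t y) 0 1 = 0.
Proof.
  intros Ht. apply (zero_int (fun y => HY t y)).
  intros; apply HY_der, mu_nz; auto. intros; apply c2_xc, c2_HYx; auto.
  destruct (per_u1 t) as [A [B [C [D [E F]]]]]. unfold HY, mu. rewrite sg_per, A, C. auto.
Qed.

Lemma int_sgQ t : RInt (fun y => sg t y * Qx t y) 0 1 = - RInt (fun y => sx t y * Q t y) 0 1.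
Proof.
  assert (E1 : ex_RInt (fun y => sg t y * Qx t y) 0 1).
  { apply (ex_c2 (fun s y => sg s y * Qx s y)). intros; apply continuity_2d_pt_mult; [apply c2_sg|apply c2_Qx]. }
  assert (E2 : ex_RInt (fun y => sx t y * Q t y) 0 1).
  { apply (ex_c2 (fun s y => sx s y * Q s y)). intros; apply continuity_2d_pt_mult; [apply c2_sx|apply c2_Q]. }
  assert (Z0 : RInt (fun y => sx t y * Q t y + sg t y * Qx t y) 0 1 = 0).
  { apply (zero_int (fun y => sg t y * Q t y)).
    - intros y Hy. apply (is_derive_mult (fun y => sg t y) (fun y => Q t y)).
      apply sg_der. apply Q_der. intros; simpl; unfold mult; simpl; ring.
    - intros y Hy. apply (c2_xc (fun s y => sx s y * Q s y + sg s y * Qx s y)).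
      apply continuity_2d_pt_plus; apply continuity_2d_pt_mult; auto using c2_sx, c2_Q, c2_sg, c2_Qx.
    - destruct (per_u1 t) as [A [B [C [D [E F]]]]]. unfold Q. rewrite sg_per, A, B, F. auto. }
  rewrite RInt_plusR in Z0 by auto. lra.
Qed.

Lemma Q_eq t y : 0 <= t <= T -> Q t y = sx t y / rho t y.
Proof.
  intros Ht. destruct (ND t y Ht) as [_ [_ [D3 _]]]. unfold Q. rewrite D3. field. apply rho_nz; auto.
Qed.

Lemma Yd_eq t : 0 <= t <= T ->
  Yd t = -2 * RInt (fun y => sx t y ^ 2 / rho t y) 0 1 - RInt (fun y => bb t y * sg t y ^ 2 * pDx u t y) 0 1.
Proof.
  intros Ht.
  assert (EH : ex_RInt (fun y => HYx t y) 0 1) by (apply ex_RInt_c2; [lra|intros; apply c2_HYx; auto]).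
  assert (E1 : ex_RInt (fun y => sg t y * Qx t y) 0 1).
  { apply (ex_c2 (fun s y => sg s y * Qx s y)). intros; apply continuity_2d_pt_mult; [apply c2_sg|apply c2_Qx]. }
  assert (E3 : ex_RInt (fun y => bb t y * sg t y ^ 2 * pDx u t y) 0 1).
  { apply (ex_RInt_c2 (fun s y => bb s y * sg s y ^ 2 * pDx u s y)). lra. intros.
    apply continuity_2d_pt_mult. apply continuity_2d_pt_mult. apply c2_bb; auto. apply c2_pow, c2_sg. c2t. }
  unfold Yd. rewrite (RInt_extR _ (fun y => ((-1) * HYx t y + 2 * (sg t y * Qx t y)) - bb t y * sg t y ^ 2 * pDx u t y)).
  2: lra. 2:{ intros y Hy. rewrite dY_id; auto. ring. }
  rewrite RInt_minusR. rewrite RInt_plusR. rewrite RInt_scalR. rewrite RInt_scalR.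
  rewrite int_HYx, int_sgQ by auto.
  rewrite (RInt_extR (fun y => sx t y * Q t y) (fun y => sx t y ^ 2 / rho t y)).
  toR; ring. lra. intros y Hy. rewrite Q_eq; auto. field. apply rho_nz; auto.
  all: auto using ex_RInt_scalR, ex_RInt_plusR.
Qed.

Definition V t := RInt (fun y => sg t y ^ 2) 0 1.
Definition G t := RInt (fun y => sx t y ^ 2) 0 1.
Definition Bb := (1 + 2 * ((ghi - 1) / cvlo)) / mlo.

Lemma exV t : ex_RInt (fun y => sg t y ^ 2) 0 1.
Proof. apply (ex_c2 (fun s y => sg s y ^ 2)). intros; apply c2_pow, c2_sg. Qed.
Lemma exG t : ex_RInt (fun y => sx t y ^ 2) 0 1.
Proof. apply (ex_c2 (fun s y => sx s y ^ 2)). intros; apply c2_pow, c2_sx. Qed.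
Lemma exZ t : ex_RInt (fun y => pDx u t y ^ 2) 0 1.
Proof. apply (ex_c2 (fun s y => pDx u s y ^ 2)). intros; c2t. Qed.
Lemma exY t : 0 <= t <= T -> ex_RInt (fun y => FY t y) 0 1.
Proof. intros Ht. apply ex_RInt_c2. lra. intros; apply c2_FY, mu_nz; auto. Qed.

Lemma V_ge0 t : 0 <= V t.
Proof. apply RInt_ge0. lra. apply exV. intros; apply pow2_ge_0. Qed.
Lemma G_ge0 t : 0 <= G t.
Proof. apply RInt_ge0. lra. apply exG. intros; apply pow2_ge_0. Qed.
Lemma Y_ge0 t : 0 <= t <= T -> 0 <= Y t.
Proof. intros Ht. apply RInt_ge0. lra. apply exY; auto. intros y Hy. unfold FY.
  apply Rdiv_le_0_compat. apply pow2_ge_0. pose proof (B_mu t y Ht). pose proof mlo_pos. lra. Qed.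

Lemma bb_bounds t y : 0 <= t <= T -> 0 < bb t y <= Bb.
Proof.
  intros Ht. pose proof (B_mu t y Ht). pose proof (B_cv t y Ht). pose proof (B_ga t y Ht).
  pose proof mlo_pos. pose proof cvlo_pos. pose proof glo_gt1.
  assert (N1 : 0 <= (ga t y - 1) / cv t y) by (apply Rdiv_le_0_compat; lra).
  assert (N2 : (ga t y - 1) / cv t y <= (ghi - 1) / cvlo).
  { unfold Rdiv. apply Rmult_le_compat; try lra. left; apply Rinv_0_lt_compat; lra.
    apply Rinv_le_contravar; lra. }
  unfold bb, Bb. split.
  - apply Rdiv_lt_0_compat; lra.
  - unfold Rdiv at 1 3. apply Rmult_le_compat; try lra. left; apply Rinv_0_lt_compat; lra.
    apply Rinv_le_contravar; lra.
Qed.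

Lemma sg_sup t y : 0 <= y <= 1 -> sg t y ^ 2 <= 2 * V t + 2 * G t.
Proof.
  intros Hy. unfold V, G. apply (sup_bound (fun y => sg t y) (fun y => sx t y)); auto.
  intros; apply sg_der. intros; apply c2_xc, c2_sx.
Qed.

Lemma Yd_bound t l : 0 <= t <= T -> 0 < l ->
  Yd t <= -2 * G t / rho_hi + Bb * ((2 * V t + 2 * G t) / l + l) * (V t + Z t) / 4.
Proof.
  intros Ht Hl. rewrite Yd_eq by auto.
  assert (E1 : ex_RInt (fun y => sx t y ^ 2 / rho t y) 0 1).
  { apply (ex_RInt_c2 (fun s y => sx s y ^ 2 / rho s y)). lra. intros. apply c2_div.
    apply c2_pow, c2_sx. c2t. apply rho_nz; auto. }
  assert (E3 : ex_RInt (fun y => bb t y * sg t y ^ 2 * pDx u t y) 0 1).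
  { apply (ex_RInt_c2 (fun s y => bb s y * sg s y ^ 2 * pDx u s y)). lra. intros.
    apply continuity_2d_pt_mult. apply continuity_2d_pt_mult. apply c2_bb; auto. apply c2_pow, c2_sg. c2t. }
  assert (I1 : G t / rho_hi <= RInt (fun y => sx t y ^ 2 / rho t y) 0 1).
  { unfold G. replace (RInt (fun y => sx t y ^ 2) 0 1 / rho_hi) with (RInt (fun y => / rho_hi * sx t y ^ 2) 0 1).
    2:{ rewrite RInt_scalR. toR. unfold Rdiv; ring. apply exG. }
    apply RInt_leR; auto. lra. apply ex_RInt_scalR, exG.
    intros y Hy. pose proof (Br t y Ht). pose proof (pow2_ge_0 (sx t y)).
    unfold Rdiv. rewrite Rmult_comm. apply Rmult_le_compat_l; auto. apply Rinv_le_contravar; lra. }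
  set (S := 2 * V t + 2 * G t).
  assert (I2 : - RInt (fun y => bb t y * sg t y ^ 2 * pDx u t y) 0 1 <=
               Bb * ((S / l + l) / 2) * / 2 * (V t + Z t)).
  { assert (R1 : RInt (fun y => (-1) * (bb t y * sg t y ^ 2 * pDx u t y)) 0 1 =
                 - RInt (fun y => bb t y * sg t y ^ 2 * pDx u t y) 0 1).
    { rewrite RInt_scalR by auto. toR. ring. }
    assert (R2 : RInt (fun y => Bb * ((S / l + l) / 2) * / 2 * (sg t y ^ 2 + pDx u t y ^ 2)) 0 1 =
                 Bb * ((S / l + l) / 2) * / 2 * (V t + Z t)).
    { rewrite RInt_scalR. rewrite RInt_plusR. reflexivity. apply exV. apply exZ.
      apply ex_RInt_plusR; [apply exV|apply exZ]. }
    rewrite <- R1, <- R2. apply RInt_leR. lra.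
    apply ex_RInt_scalR; auto.
    apply ex_RInt_scalR, ex_RInt_plusR; [apply exV|apply exZ].
    intros y Hy.
    replace (Bb * ((S / l + l) / 2) * / 2 * (sg t y ^ 2 + pDx u t y ^ 2)) with
      (Bb * ((S / l + l) / 2) * ((sg t y ^ 2 + pDx u t y ^ 2) / 2)) by (field; lra).
    replace (-1 * (bb t y * sg t y ^ 2 * pDx u t y)) with (- (bb t y * sg t y ^ 2 * pDx u t y)) by ring.
    apply pt_alg; auto. apply bb_bounds; auto. apply sg_sup; auto. }
  replace (Bb * ((2 * V t + 2 * G t) / l + l) * (V t + Z t) / 4) with (Bb * ((S / l + l) / 2) * / 2 * (V t + Z t))
    by (unfold S; field; lra).
  assert (-2 * G t / rho_hi = -2 * (G t / rho_hi)) by (field; lra).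
  lra.
Qed.

Lemma lin_int (f g : R -> R) (a b : R) :
  ex_RInt f 0 1 -> ex_RInt g 0 1 ->
  (forall y, 0 <= y <= 1 -> f y <= a * g y + b) -> RInt f 0 1 <= a * RInt g 0 1 + b.
Proof.
  intros Ef Eg H.
  assert (E : RInt (fun y => a * g y + b) 0 1 = a * RInt g 0 1 + b).
  { rewrite RInt_plusR, RInt_scalR, RInt_constR by auto using ex_RInt_scalR, ex_RInt_constR. toR. ring. }
  rewrite <- E. apply RInt_leR; auto. lra. apply ex_RInt_plusR. apply ex_RInt_scalR; auto. apply ex_RInt_constR.
Qed.

Lemma V_le_Y t : 0 <= t <= T -> V t <= mhi * Y t + 0.
Proof.
  intros Ht. apply lin_int. apply exV. apply exY; auto.
  intros y Hy. unfold FY. pose proof (B_mu t y Ht). pose proof mlo_pos. pose proof (pow2_ge_0 (sg t y)).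
  assert (sg t y ^ 2 / mu t y * mu t y <= sg t y ^ 2 / mu t y * mhi).
  { apply Rmult_le_compat_l. apply Rdiv_le_0_compat; lra. lra. }
  replace (sg t y ^ 2 / mu t y * mu t y) with (sg t y ^ 2) in H2 by (field; lra). lra.
Qed.

Lemma Z_le_V t : 0 <= t <= T -> Z t <= 2 / mlo ^ 2 * V t + 2 * Pm ^ 2 / mlo ^ 2.
Proof.
  intros Ht. apply lin_int. apply exZ. apply exV.
  intros y Hy. pose proof (B_mu t y Ht). pose proof mlo_pos. pose proof (B_pr t y Ht).
  assert (E : pDx u t y = (sg t y + pr t y) / mu t y) by (rewrite sg_eq; field; lra).
  rewrite E. pose proof (sq_sum (sg t y) (pr t y)).
  assert (P2 : pr t y ^ 2 <= Pm ^ 2) by (apply pow_incr; lra).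
  assert (M2 : mlo ^ 2 <= mu t y ^ 2) by (apply pow_incr; lra).
  assert (Mp : 0 < mlo ^ 2) by (apply pow_lt; lra).
  replace (((sg t y + pr t y) / mu t y) ^ 2) with ((sg t y + pr t y) ^ 2 / mu t y ^ 2) by (field; lra).
  replace (2 / mlo ^ 2 * sg t y ^ 2 + 2 * Pm ^ 2 / mlo ^ 2) with ((2 * sg t y ^ 2 + 2 * Pm ^ 2) / mlo ^ 2) by (field; lra).
  apply Rle_trans with ((2 * sg t y ^ 2 + 2 * Pm ^ 2) / mu t y ^ 2).
  - unfold Rdiv. apply Rmult_le_compat_r. left; apply Rinv_0_lt_compat; lra. lra.
  - unfold Rdiv. apply Rmult_le_compat_l. pose proof (pow2_ge_0 (sg t y)). pose proof (pow2_ge_0 Pm). lra.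
    apply Rinv_le_contravar; lra.
Qed.

Lemma V_le_Z t : 0 <= t <= T -> V t <= 2 * mhi ^ 2 * Z t + 2 * Pm ^ 2.
Proof.
  intros Ht. apply lin_int. apply exV. apply exZ.
  intros y Hy. pose proof (B_mu t y Ht). pose proof mlo_pos. pose proof (B_pr t y Ht).
  rewrite sg_eq. replace (mu t y * pDx u t y - pr t y) with (mu t y * pDx u t y + - pr t y) by ring.
  pose proof (sq_sum (mu t y * pDx u t y) (- pr t y)).
  assert (P2 : (- pr t y) ^ 2 <= Pm ^ 2) by (replace ((- pr t y) ^ 2) with (pr t y ^ 2) by ring; apply pow_incr; lra).
  assert (M2 : (mu t y * pDx u t y) ^ 2 <= mhi ^ 2 * pDx u t y ^ 2).
  { rewrite Rpow_mult_distr. apply Rmult_le_compat_r. apply pow2_ge_0. apply pow_incr; lra. }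
  lra.
Qed.

Definition a1 := mhi.
Definition a2 := 2 / mlo ^ 2.
Definition a3 := 2 * Pm ^ 2 / mlo ^ 2.
Definition a4 := 2 * mhi ^ 2.
Definition a5 := 2 * Pm ^ 2.
Definition Acoef := (a4 + 1 + a5) / (2 * rho_hi) + (Bb ^ 2 * rho_hi * (a4 + 1 + a5) * (a1 + a2 * a1 + a3)
        + Bb * (a4 + 1 + a5)) / 4.

Lemma Bb_pos : 0 < Bb.
Proof. unfold Bb. pose proof mlo_pos. pose proof cvlo_pos. pose proof glo_gt1. pose proof glo_ghi.
  apply Rdiv_lt_0_compat; auto. assert (0 <= (ghi - 1) / cvlo) by (apply Rdiv_le_0_compat; lra). lra. Qed.

Lemma consts_pos : 0 <= a1 /\ 0 <= a2 /\ 0 <= a3 /\ 0 <= a4 /\ 0 <= a5.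
Proof.
  pose proof mlo_pos. pose proof mlo_mhi. assert (0 < mlo ^ 2) by (apply pow_lt; lra).
  pose proof (pow2_ge_0 Pm). pose proof (pow2_ge_0 mhi).
  unfold a1, a2, a3, a4, a5. repeat split; try lra; apply Rdiv_le_0_compat; lra.
Qed.

Lemma Acoef_pos : 0 <= Acoef.
Proof.
  destruct consts_pos as [h1 [h2 [h3 [h4 h5]]]]. pose proof Bb_pos. unfold Acoef.
  apply Rplus_le_le_0_compat. apply Rdiv_le_0_compat; lra.
  apply Rdiv_le_0_compat; [|lra]. apply Rplus_le_le_0_compat.
  apply Rmult_le_pos. apply Rmult_le_pos. apply Rmult_le_pos. apply pow2_ge_0. lra. lra.
  assert (0 <= a2 * a1) by (apply Rmult_le_pos; lra). lra.
  apply Rmult_le_pos; lra.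
Qed.

Lemma Yd_key t : 0 <= t <= T -> Yd t <= - G t / rho_hi + Acoef * ((Z t + 1) * (Y t + 1)).
Proof.
  intros Ht. destruct consts_pos as [h1 [h2 [h3 [h4 h5]]]]. unfold Acoef.
  apply (alg (Yd t) (V t) (Z t) (Y t) (G t) rho_hi Bb a1 a2 a3 a4 a5); auto.
  - left; apply Bb_pos.
  - apply V_ge0. - apply Z_ge0. - apply Y_ge0; auto. - apply G_ge0.
  - pose proof (V_le_Y t Ht). unfold a1; lra.
  - pose proof (Z_le_V t Ht). unfold a2, a3. lra.
  - pose proof (V_le_Z t Ht). unfold a4, a5. lra.
  - intros l Hl. apply Yd_bound; auto.
Qed.

Lemma ux_sq t y : 0 <= t <= T -> pDx u t y ^ 2 <= a2 * sg t y ^ 2 + a3.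
Proof.
  intros Ht. unfold a2, a3. pose proof (B_mu t y Ht). pose proof mlo_pos. pose proof (B_pr t y Ht).
  assert (E : pDx u t y = (sg t y + pr t y) / mu t y) by (rewrite sg_eq; field; lra).
  rewrite E. pose proof (sq_sum (sg t y) (pr t y)).
  assert (P2 : pr t y ^ 2 <= Pm ^ 2) by (apply pow_incr; lra).
  assert (M2 : mlo ^ 2 <= mu t y ^ 2) by (apply pow_incr; lra).
  assert (Mp : 0 < mlo ^ 2) by (apply pow_lt; lra).
  replace (((sg t y + pr t y) / mu t y) ^ 2) with ((sg t y + pr t y) ^ 2 / mu t y ^ 2) by (field; lra).
  replace (2 / mlo ^ 2 * sg t y ^ 2 + 2 * Pm ^ 2 / mlo ^ 2) with ((2 * sg t y ^ 2 + 2 * Pm ^ 2) / mlo ^ 2) by (field; lra).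
  apply Rle_trans with ((2 * sg t y ^ 2 + 2 * Pm ^ 2) / mu t y ^ 2).
  - unfold Rdiv. apply Rmult_le_compat_r. left; apply Rinv_0_lt_compat; lra. lra.
  - unfold Rdiv. apply Rmult_le_compat_l. pose proof (pow2_ge_0 (sg t y)). pose proof (pow2_ge_0 Pm). lra.
    apply Rinv_le_contravar; lra.
Qed.

Lemma Y0_le : Y 0 <= V 0 / mlo.
Proof.
  assert (H0 : 0 <= 0 <= T) by lra. pose proof mlo_pos.
  unfold Y, V. replace (RInt (fun y => sg 0 y ^ 2) 0 1 / mlo) with ((/ mlo) * RInt (fun y => sg 0 y ^ 2) 0 1 + 0) by (field; lra).
  apply lin_int. apply exY; auto. apply exV.
  intros y Hy. unfold FY. pose proof (B_mu 0 y H0). pose proof (pow2_ge_0 (sg 0 y)).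
  rewrite Rplus_0_r. unfold Rdiv. rewrite Rmult_comm. apply Rmult_le_compat_r; auto. apply Rinv_le_contravar; lra.
Qed.

Definition YB (S0 : R) := (Rabs S0 / mlo + 1) * exp (Acoef * (K + T)).

Lemma Z_cont' s : continuous Z s.
Proof. apply Z_cont. Qed.

Lemma Gronwall t1 : 0 <= t1 <= T -> Y t1 + 1 <= YB (V 0).
Proof.
  intros Ht. pose proof Acoef_pos. pose proof mlo_pos.
  assert (Pos : forall s, 0 <= s <= T -> 0 < Y s + 1) by (intros s Hs; pose proof (Y_ge0 s Hs); lra).
  assert (D : forall s, 0 <= s <= T -> is_derive (fun s => ln (Y s + 1)) s (Yd s / (Y s + 1))).
  { intros s Hs. specialize (Pos s Hs). auto_derive. split; [eexists; apply Y_der; auto|split; auto].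
    replace (Derive (fun x => Y x) s) with (Yd s) by (symmetry; apply is_derive_unique; apply Y_der; auto). field. lra. }
  assert (F : RInt (fun s => Yd s / (Y s + 1)) 0 t1 = ln (Y t1 + 1) - ln (Y 0 + 1)).
  { apply (FTC (fun s => ln (Y s + 1))). lra. intros; apply D; lra.
    intros s Hs. apply cont_divp1. apply Yd_cont; lra. apply Y_cont; lra. apply Pos; lra. }
  assert (B : RInt (fun s => Yd s / (Y s + 1)) 0 t1 <= Acoef * RInt Z 0 t1 + Acoef * t1).
  { replace (Acoef * t1) with (Acoef * (t1 - 0)) by ring.
    rewrite <- RInt_constR. rewrite <- RInt_scalR by (apply ex_Z; lra). rewrite <- RInt_plusR.
    2:{ apply ex_RInt_scalR, ex_Z; lra. } 2: apply ex_RInt_constR.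
    apply RInt_leR. lra. apply cont_ex. lra. intros s Hs. apply cont_divp1. apply Yd_cont; lra. apply Y_cont; lra. apply Pos; lra.
    apply ex_RInt_plusR. apply ex_RInt_scalR, ex_Z; lra. apply ex_RInt_constR.
    intros s Hs. assert (Hs' : 0 <= s <= T) by lra. pose proof (Yd_key s Hs'). pose proof (G_ge0 s).
    pose proof (Pos s Hs').
    apply Rmult_le_reg_r with (Y s + 1); auto.
    assert (EQ : @eq R (Yd s / (Y s + 1) * (Y s + 1)) (Yd s)) by (field; lra). rewrite EQ.
    assert (0 <= G s / rho_hi) by (apply Rdiv_le_0_compat; lra).
    assert (EQ2 : @eq R ((Acoef * Z s + Acoef) * (Y s + 1)) (Acoef * ((Z s + 1) * (Y s + 1)))) by ring.
    rewrite EQ2. lra. }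
  pose proof (Z_int t1 Ht).
  assert (LB : ln (Y t1 + 1) <= ln (Y 0 + 1) + Acoef * (K + T)).
  { assert (Acoef * RInt Z 0 t1 <= Acoef * K) by (apply Rmult_le_compat_l; auto).
    assert (Acoef * t1 <= Acoef * T) by (apply Rmult_le_compat_l; lra). lra. }
  assert (Y0 : Y 0 + 1 <= Rabs (V 0) / mlo + 1).
  { pose proof Y0_le. assert (V 0 / mlo <= Rabs (V 0) / mlo). unfold Rdiv.
    apply Rmult_le_compat_r. left; apply Rinv_0_lt_compat; lra. apply Rle_abs. lra. }
  unfold YB. rewrite <- (exp_ln (Y t1 + 1)) by (apply Pos; auto).
  apply Rle_trans with (exp (ln (Y 0 + 1) + Acoef * (K + T))).
  { destruct LB as [LB|LB]. left; apply exp_increasing; auto. rewrite LB; lra. }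
  rewrite exp_plus, exp_ln by (apply Pos; lra). apply Rmult_le_compat_r. left; apply exp_pos. auto.
Qed.

Lemma G_cont s : continuous G s.
Proof. apply RInt_cont_param. exists 1; split; [lra|]. intros. apply c2_pow, c2_sx. Qed.
Lemma ex_G a b : a <= b -> ex_RInt G a b.
Proof. intros; apply cont_ex; auto. intros; apply G_cont. Qed.

Lemma K_pos : 0 <= K.
Proof.
  pose proof mlo_pos. pose proof cvlo_pos. pose proof cvlo_cvhi. unfold K, Jhi.
  apply Rmult_le_pos. apply Rdiv_le_0_compat; lra.
  assert (0 <= rho_hi * cvhi * th_hi) by (apply Rmult_le_pos; [apply Rmult_le_pos|]; lra).
  assert (0 <= Pm ^ 2 / (2 * mlo)) by (apply Rdiv_le_0_compat; [apply pow2_ge_0|lra]).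
  assert (0 <= T * (Pm ^ 2 / (2 * mlo))) by (apply Rmult_le_pos; lra). lra.
Qed.

Lemma YB_pos S : 0 < YB S.
Proof. unfold YB. pose proof mlo_pos. apply Rmult_lt_0_compat. 
  assert (0 <= Rabs S / mlo) by (apply Rdiv_le_0_compat; [apply Rabs_pos|lra]). lra. apply exp_pos. Qed.

Definition GI S := rho_hi * (Rabs S / mlo + Acoef * YB S * (K + T)).

Lemma G_int : RInt G 0 T <= GI (V 0).
Proof.
  pose proof Acoef_pos. pose proof mlo_pos. pose proof (YB_pos (V 0)) as HYB.
  assert (F : RInt Yd 0 T = Y T - Y 0).
  { apply FTC. lra. intros; apply Y_der; auto. intros; apply Yd_cont; auto. }
  set (c0 := Acoef * YB (V 0)).
  assert (Hc0 : 0 <= c0) by (unfold c0; apply Rmult_le_pos; lra).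
  assert (L : RInt Yd 0 T <= RInt (fun s => (- / rho_hi) * G s + (c0 * Z s + c0)) 0 T).
  { apply RInt_leR. lra. apply cont_ex. lra. intros; apply Yd_cont; auto.
    apply ex_RInt_plusR. apply ex_RInt_scalR, ex_G; lra. apply ex_RInt_plusR. apply ex_RInt_scalR, ex_Z; lra.
    apply ex_RInt_constR.
    intros s Hs. pose proof (Yd_key s Hs). pose proof (Gronwall s Hs). pose proof (Z_ge0 s).
    assert (Acoef * ((Z s + 1) * (Y s + 1)) <= c0 * Z s + c0).
    { unfold c0. replace (Acoef * YB (V 0) * Z s + Acoef * YB (V 0)) with (Acoef * ((Z s + 1) * YB (V 0))) by ring.
      apply Rmult_le_compat_l; auto. apply Rmult_le_compat_l; lra. }
    assert (E : - G s / rho_hi = - / rho_hi * G s) by (field; lra). lra. }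
  assert (EI : @eq R (RInt (fun s => (- / rho_hi) * G s + (c0 * Z s + c0)) 0 T)
                 ((- / rho_hi) * RInt G 0 T + (c0 * RInt Z 0 T + c0 * T))).
  { rewrite RInt_plusR. rewrite RInt_scalR. rewrite RInt_plusR. rewrite RInt_scalR. rewrite RInt_constR.
    toR. ring.
    apply ex_Z; lra. apply ex_RInt_scalR, ex_Z; lra. apply ex_RInt_constR. apply ex_G; lra.
    apply ex_RInt_scalR, ex_G; lra. apply ex_RInt_plusR. apply ex_RInt_scalR, ex_Z; lra. apply ex_RInt_constR. }
  rewrite EI, F in L. clear EI F.
  pose proof (Z_int T ltac:(lra)) as ZI. pose proof (Y_ge0 T ltac:(lra)) as YT.
  pose proof Y0_le as Y0l.
  assert (Y0 : Y 0 <= Rabs (V 0) / mlo).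
  { unfold Rdiv in *. apply Rle_trans with (V 0 * / mlo); auto. apply Rmult_le_compat_r.
    left; apply Rinv_0_lt_compat; lra. apply Rle_abs. }
  assert (C : c0 * RInt Z 0 T <= c0 * K) by (apply Rmult_le_compat_l; auto).
  unfold GI. fold c0.
  set (IG := RInt G 0 T) in *. set (A0 := Rabs (V 0) / mlo) in *.
  assert (RI : - / rho_hi * IG = - (IG / rho_hi)) by (field; lra).
  rewrite RI in L.
  assert (IG / rho_hi <= A0 + c0 * (K + T)) by lra.
  apply Rmult_le_reg_l with (/ rho_hi). apply Rinv_0_lt_compat; lra.
  replace (/ rho_hi * (rho_hi * (A0 + c0 * (K + T)))) with (A0 + c0 * (K + T)) by (field; lra).
  replace (/ rho_hi * IG) with (IG / rho_hi) by (field; lra).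
  lra.
Qed.

Definition C8 S := a2 * mhi * YB S + a3 + 1.
Definition C9 S := a2 * (2 * mhi * YB S * T + 2 * GI S) + a3 * T + 1.

Lemma C_pos S : 0 < C8 S /\ 0 < C9 S.
Proof.
  destruct consts_pos as [h1 [h2 [h3 [h4 h5]]]]. pose proof (YB_pos S). pose proof mlo_pos. pose proof mlo_mhi.
  pose proof Acoef_pos. pose proof K_pos.
  assert (0 <= GI S).
  { unfold GI. apply Rmult_le_pos. lra. assert (0 <= Rabs S / mlo) by (apply Rdiv_le_0_compat; [apply Rabs_pos|lra]).
    assert (0 <= Acoef * YB S * (K + T)) by (apply Rmult_le_pos; [apply Rmult_le_pos|]; lra). lra. }
  unfold C8, C9. split.
  - assert (0 <= a2 * mhi * YB S) by (apply Rmult_le_pos; [apply Rmult_le_pos|]; lra). lra.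
  - assert (0 <= a2 * (2 * mhi * YB S * T + 2 * GI S)).
    { apply Rmult_le_pos. lra. assert (0 <= mhi * YB S * T) by (apply Rmult_le_pos; [apply Rmult_le_pos|]; lra). lra. }
    assert (0 <= a3 * T) by (apply Rmult_le_pos; lra). lra.
Qed.

Lemma main_Z t : 0 <= t <= T -> Z t <= C8 (V 0).
Proof.
  intros Ht. destruct consts_pos as [h1 [h2 [h3 [h4 h5]]]]. pose proof (YB_pos (V 0)). pose proof mlo_pos. pose proof mlo_mhi.
  pose proof (Z_le_V t Ht) as A. pose proof (V_le_Y t Ht) as B.
  pose proof (Gronwall t Ht) as Cc. pose proof (Y_ge0 t Ht) as D. unfold C8. fold a2 a3 in A.
  assert (E : a2 * V t <= a2 * (mhi * YB (V 0))).
  { apply Rmult_le_compat_l; auto. apply Rle_trans with (mhi * Y t + 0). auto.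
    rewrite Rplus_0_r. apply Rmult_le_compat_l; lra. }
  assert (F : a2 * (mhi * YB (V 0)) = a2 * mhi * YB (V 0)) by ring.
  Timeout 20 lra.
Qed.

Lemma Linf_pt t : 0 <= t <= T ->
  Linf_norm (fun x => pDx u t x) ^ 2 <= a2 * (2 * mhi * YB (V 0)) + (2 * a2) * G t + a3.
Proof.
  intros Ht. destruct consts_pos as [h1 [h2 [h3 [h4 h5]]]]. pose proof (YB_pos (V 0)). pose proof mlo_pos. pose proof mlo_mhi.
  apply Linf_sq_le.
  - pose proof (G_ge0 t). assert (0 <= a2 * (2 * mhi * YB (V 0))).
    { apply Rmult_le_pos; auto. assert (0 <= mhi * YB (V 0)) by (apply Rmult_le_pos; lra). lra. }
    assert (0 <= 2 * a2 * G t) by (apply Rmult_le_pos; lra). lra.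
  - intros x Hx. pose proof (ux_sq t x Ht) as A1. pose proof (sg_sup t x Hx) as A2.
    pose proof (V_le_Y t Ht) as A3. pose proof (Gronwall t Ht) as A4. pose proof (Y_ge0 t Ht) as A5.
    assert (A6 : V t <= mhi * YB (V 0)).
    { apply Rle_trans with (mhi * Y t + 0). auto. rewrite Rplus_0_r. apply Rmult_le_compat_l; lra. }
    assert (A7 : a2 * sg t x ^ 2 <= a2 * (2 * V t + 2 * G t)) by (apply Rmult_le_compat_l; auto).
    assert (A8 : a2 * V t <= a2 * (mhi * YB (V 0))) by (apply Rmult_le_compat_l; auto).
    assert (E1 : a2 * (2 * V t + 2 * G t) = 2 * (a2 * V t) + 2 * a2 * G t) by ring.
    assert (E2 : a2 * (2 * mhi * YB (V 0)) = 2 * (a2 * (mhi * YB (V 0)))) by ring.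
    Timeout 20 lra.
Qed.

Lemma main_L : RInt (fun t => (Linf_norm (fun x => pDx u t x)) ^ 2) 0 T <= C9 (V 0).
Proof.
  destruct consts_pos as [h1 [h2 [h3 [h4 h5]]]].
  set (h := fun t => a2 * (2 * mhi * YB (V 0)) + (2 * a2) * G t + a3).
  apply Rle_trans with (RInt h 0 T).
  - apply RInt_leR. lra.
    + apply cont_ex. lra. intros; apply cont_sq. apply (Linf_cont (pDx u)). intros. apply (sm_c2 (pDx u)). smt.
    + unfold h. apply ex_RInt_plusR. apply ex_RInt_plusR. apply ex_RInt_constR.
      apply ex_RInt_scalR, ex_G; lra. apply ex_RInt_constR.
    + intros; apply Linf_pt; auto.
  - assert (EI : @eq R (RInt h 0 T) (a2 * (2 * mhi * YB (V 0)) * (T - 0) + (2 * a2) * RInt G 0 T + a3 * (T - 0))).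
    { unfold h. rewrite RInt_plusR. rewrite RInt_plusR. rewrite RInt_constR. rewrite RInt_scalR. rewrite RInt_constR.
      toR. ring. apply ex_G; lra. apply ex_RInt_constR. apply ex_RInt_scalR, ex_G; lra.
      apply ex_RInt_plusR. apply ex_RInt_constR. apply ex_RInt_scalR, ex_G; lra. apply ex_RInt_constR. }
    rewrite EI. pose proof G_int. unfold C9.
    assert (2 * a2 * RInt G 0 T <= 2 * a2 * GI (V 0)) by (apply Rmult_le_compat_l; lra).
    assert (a2 * (2 * mhi * YB (V 0)) * (T - 0) = a2 * (2 * mhi * YB (V 0) * T)) by ring.
    assert (a2 * (2 * mhi * YB (V 0) * T + 2 * GI (V 0)) = a2 * (2 * mhi * YB (V 0) * T) + 2 * a2 * GI (V 0)) by ring.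
    Timeout 20 lra.
Qed.

Lemma main_sec : (forall t, 0 <= t <= T -> RInt (fun x => (pDx u t x) ^ 2) 0 1 <= C8 (V 0)) /\
  RInt (fun t => (Linf_norm (fun x => pDx u t x)) ^ 2) 0 T <= C9 (V 0).
Proof. split. intros t Ht. exact (main_Z t Ht). exact main_L. Qed.

End Main.

Theorem mainTheorem5 :
  forall (mu_p mu_m gam_p gam_m cv_p cv_m : R)
         (T rho_lo rho_hi th_lo th_hi S0 E0 : R),
    0 < mu_p -> 0 < mu_m -> 1 < gam_p -> 1 < gam_m -> 0 < cv_p -> 0 < cv_m ->
    0 < T -> 0 < rho_lo -> 0 < rho_hi -> 0 < th_lo -> 0 < th_hi ->
    exists C8 C9 : R, 0 < C8 /\ 0 < C9 /\
    forall c rho theta u : field,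
      smooth c -> smooth rho -> smooth theta -> smooth u ->
      periodic1 c -> periodic1 rho -> periodic1 theta -> periodic1 u ->
      NS_system mu_p mu_m gam_p gam_m cv_p cv_m T c rho theta u ->
      (forall t x, 0 <= t <= T -> 0 <= c t x <= 1) ->
      (forall t x, 0 <= t <= T -> rho_lo <= rho t x <= rho_hi) ->
      (forall t x, 0 <= t <= T -> th_lo <= theta t x <= th_hi) ->
      RInt (fun x => (sigmaNS mu_p mu_m gam_p gam_m c rho theta u 0 x) ^ 2) 0 1 = S0 ->
      RInt (fun x => rho 0 x * energyNS cv_p cv_m c theta u 0 x) 0 1 = E0 ->
      (forall t, 0 <= t <= T -> RInt (fun x => (pDx u t x) ^ 2) 0 1 <= C8) /\
      RInt (fun t => (Linf_norm (fun x => pDx u t x)) ^ 2) 0 T <= C9.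
Proof.
  intros mu_p mu_m gam_p gam_m cv_p cv_m T rho_lo rho_hi th_lo th_hi S0 E0
    Hmp Hmm Hgp Hgm Hcp Hcm HT Hrl Hrh Htl Hth.
  exists (C8 mu_p mu_m gam_p gam_m cv_p cv_m T rho_hi th_hi S0),
         (C9 mu_p mu_m gam_p gam_m cv_p cv_m T rho_hi th_hi S0).
  split; [|split].
  - eapply C_pos; eassumption.
  - eapply C_pos; eassumption.
  - intros c rho theta u Sc Sr St Su Pc Pr Pt Pu HNS Bc Br Bt HS0 HE0.
    rewrite <- HS0.
    eapply main_sec with (rho_lo := rho_lo) (th_lo := th_lo); eassumption.
Qed.
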